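(* Let $f\in C^1[0,1]$ with $f(0)=0$, $h:=f'$, $q$ satisfying (q), and let $c^*$ be the threshold for $(P^{00}_c)$. For every $c>c^*$ there exists $\beta=\beta(c)<0$ with $\beta(c)\ge f(1)-c$ such that, for $b<0$, problem $(P_c)$ admits a solution $z$ with $z(1)=b$ if and only if $b\ge\beta(c)$; moreover such a solution is unique.
   Context: Condition (q): $q\in C[0,1]$, $q>0$ on $(0,1)$, $q(0)=q(1)=0$, and $\limsup_{\varphi\to0^+}q(\varphi)/\varphi<+\infty$. For $c\in\mathbb R$, a solution of problem $(P_c)$ is a function $z\in C[0,1]\cap C^1(0,1)$ with $\dot z(\varphi)=h(\varphi)-c-q(\varphi)/z(\varphi)$ and $z(\varphi)<0$ for all $\varphi\in(0,1)$, and $z(0)=0$. A solution of $(P^{00}_c)$ is a solution of $(P_c)$ which also satisfies $z(1)=0$. $c^*$ denotes the real number such that $(P^{00}_c)$ has a solution iff $c\ge c^*$ (that solution being unique). *)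

(* Defs.v *)
From Stdlib Require Import Reals.
From Coquelicot Require Import Coquelicot.
Open Scope R_scope.

Definition cont_on (a b : R) (g : R -> R) : Prop :=
  forall x, a <= x <= b -> forall eps, 0 < eps ->
    exists delta, 0 < delta /\
      forall y, a <= y <= b -> Rabs (y - x) < delta -> Rabs (g y - g x) < eps.

(* f in C^1[0,1] with f' = h: f continuous on [0,1], f' = h on (0,1),
   and h continuous on [0,1] (equivalent to f in C^1[0,1], h = f'
   on [0,1] with one-sided derivatives at the endpoints). *)
Definition C1_with_deriv (f h : R -> R) : Prop :=
  cont_on 0 1 f /\ cont_on 0 1 h /\
  (forall x, 0 < x < 1 -> is_derive f x (h x)).

Definition cond_q (q : R -> R) : Prop :=
  cont_on 0 1 q /\
  (forall x, 0 < x < 1 -> 0 < q x) /\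
  q 0 = 0 /\ q 1 = 0 /\
  (* limsup_{x -> 0+} q(x)/x < +oo *)
  (exists M delta, 0 < delta /\ forall x, 0 < x < delta -> q x / x <= M).

Definition sol_P (h q : R -> R) (c : R) (z : R -> R) : Prop :=
  cont_on 0 1 z /\
  (forall x, 0 < x < 1 -> ex_derive z x) /\
  (forall x, 0 < x < 1 -> continuous (Derive z) x) /\
  (forall x, 0 < x < 1 -> is_derive z x (h x - c - q x / z x)) /\
  (forall x, 0 < x < 1 -> z x < 0) /\
  z 0 = 0.

Definition sol_P00 (h q : R -> R) (c : R) (z : R -> R) : Prop :=
  sol_P h q c z /\ z 1 = 0.

(* Main.v *)
Require Import Defs.
From Stdlib Require Import Reals.
From Coquelicot Require Import Coquelicot.
From Stdlib Require Import Lra Lia ClassicalEpsilon Classical.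
Open Scope R_scope.

Definition clampx (a r t : R) := Rmax a (Rmin t r).

Lemma clampx_in a r t : a <= r -> a <= clampx a r t <= r.
Proof. intros; unfold clampx, Rmax, Rmin; repeat destruct Rle_dec; lra. Qed.

Lemma clampx_id a r t : a <= t <= r -> clampx a r t = t.
Proof. intros; unfold clampx, Rmax, Rmin; repeat destruct Rle_dec; lra. Qed.

Lemma clampx_lip a r s t : a <= r -> Rabs (clampx a r s - clampx a r t) <= Rabs (s - t).
Proof.
  intros; unfold clampx, Rmax, Rmin; repeat destruct Rle_dec;
  unfold Rabs; repeat destruct Rcase_abs; lra.
Qed.

Lemma cont_hat a r g : a <= r -> cont_on a r g ->
  forall t, continuity_pt (fun s => g (clampx a r s)) t.
Proof.
  intros Har Hg t eps Heps.
  destruct (Hg (clampx a r t) (clampx_in a r t Har) eps Heps) as [d [Hd H]].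
  exists d; split; [lra|]. intros x [_ Hx]. simpl in *. unfold R_dist in *.
  apply H. apply clampx_in; auto.
  eapply Rle_lt_trans; [apply clampx_lip; auto|exact Hx].
Qed.

Lemma cont_on_pt a b g x : cont_on a b g -> a < x < b -> continuity_pt g x.
Proof.
  intros Hg Hx eps Heps.
  destruct (Hg x ltac:(lra) eps Heps) as [d [Hd H]].
  exists (Rmin d (Rmin (x - a) (b - x))); split.
  { apply Rmin_pos; [lra| apply Rmin_pos; lra]. }
  intros y [_ Hy]. simpl in *. unfold R_dist in *.
  assert (Hm1 := Rmin_l d (Rmin (x - a) (b - x))).
  assert (Hm2 := Rmin_r d (Rmin (x - a) (b - x))).
  assert (Hm3 := Rmin_l (x - a) (b - x)).
  assert (Hm4 := Rmin_r (x - a) (b - x)).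
  apply H; [|lra].
  unfold Rabs in Hy; destruct Rcase_abs in Hy; lra.
Qed.

Lemma cont_of_pt a b g : (forall x, a <= x <= b -> continuity_pt g x) -> cont_on a b g.
Proof.
  intros H x Hx eps Heps. destruct (H x Hx eps Heps) as [d [Hd H2]].
  exists d; split; [lra|]. intros y Hy Hyx.
  destruct (Req_dec x y) as [<-|Hne]. { rewrite Rminus_diag, Rabs_R0; lra. }
  apply (H2 y). split; [split; [exact I| exact Hne]| exact Hyx].
Qed.

Lemma cont_on_sub a b a' b' g : cont_on a b g -> a <= a' -> b' <= b -> cont_on a' b' g.
Proof.
  intros H H1 H2 x Hx eps Heps. destruct (H x ltac:(lra) eps Heps) as [d [Hd H3]].
  exists d; split; auto. intros y Hy. apply H3; lra.
Qed.

Lemma cont_on_bound a r g : a <= r -> cont_on a r g ->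
  exists M, forall x, a <= x <= r -> Rabs (g x) <= M.
Proof.
  intros Har Hg.
  destruct (continuity_ab_maj (fun s => Rabs (g (clampx a r s))) a r Har) as [m [Hm _]].
  { intros c _. apply (continuity_pt_comp (fun s => g (clampx a r s)) Rabs).
    apply cont_hat; auto. apply Rcontinuity_abs. }
  exists (Rabs (g (clampx a r m))). intros x Hx. specialize (Hm x Hx). simpl in Hm.
  rewrite clampx_id in Hm; auto.
Qed.

Lemma cont_on_neg a r g : a <= r -> cont_on a r g -> (forall x, a <= x <= r -> g x < 0) ->
  exists d, 0 < d /\ forall x, a <= x <= r -> g x <= - d.
Proof.
  intros Har Hg Hn.
  destruct (continuity_ab_maj (fun s => g (clampx a r s)) a r Har) as [m [Hm Hm2]].
  { intros c _. apply cont_hat; auto. }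
  exists (- g (clampx a r m)). split.
  { rewrite clampx_id; auto. specialize (Hn m Hm2). lra. }
  intros x Hx. specialize (Hm x Hx). simpl in Hm. rewrite (clampx_id a r x) in Hm; auto. lra.
Qed.

Lemma mono_le a b phi : a <= b -> cont_on a b phi ->
  (forall x, a < x < b -> exists l, is_derive phi x l /\ 0 <= l) -> phi a <= phi b.
Proof.
  intros Hab Hc Hd. destruct (Req_dec a b) as [->|Hne]; [lra|].
  set (psi := fun s => phi (clampx a b s)).
  assert (Hloc : forall x, a < x < b -> locally x (fun t => phi t = psi t)).
  { intros x Hx. exists (mkposreal (Rmin (x - a) (b - x)) ltac:(apply Rmin_pos; lra)).
    intros y Hy. unfold psi. rewrite clampx_id; auto.
    unfold ball in Hy; simpl in Hy; unfold AbsRing_ball, abs, minus, plus, opp in Hy; simpl in Hy.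
    assert (Hm3 := Rmin_l (x - a) (b - x)). assert (Hm4 := Rmin_r (x - a) (b - x)).
    unfold Rabs in Hy; destruct Rcase_abs in Hy; lra. }
  assert (Hpd : forall x, a < x < b -> is_derive psi x (Derive phi x)).
  { intros x Hx. destruct (Hd x Hx) as [l [Hl _]]. apply (is_derive_ext_loc phi); auto.
    rewrite (is_derive_unique _ _ _ Hl); auto. }
  assert (pr1 : forall c, a < c < b -> derivable_pt psi c).
  { intros c Hc0. apply ex_derive_Reals_0. eexists; apply Hpd; auto. }
  assert (pr2 : forall c, a < c < b -> derivable_pt id c).
  { intros c _. apply derivable_pt_id. }
  destruct (MVT psi id a b pr1 pr2 ltac:(lra)) as [c [P Heq]].
  { intros c _. apply cont_hat; auto. }
  { intros c _. apply derivable_continuous_pt, derivable_pt_id. }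
  rewrite Derive_Reals in Heq.
  rewrite (is_derive_unique _ _ _ (Hpd c P)) in Heq.
  destruct (Hd c P) as [l [Hl Hl0]]. rewrite (is_derive_unique _ _ _ Hl) in Heq.
  rewrite (Derive_Reals id) in Heq. rewrite (is_derive_unique id c 1) in Heq by (apply (is_derive_id c)).  unfold id in Heq.
  unfold psi in Heq. rewrite !clampx_id in Heq by lra.
  assert (0 <= (b - a) * l) by (apply Rmult_le_pos; lra). lra.
Qed.

Definition gcont (g : R -> R) := forall x, continuity_pt g x.

Lemma gcont_ex_RInt g a b : gcont g -> ex_RInt g a b.
Proof.
  intros H. apply (ex_RInt_continuous (V:=R_CompleteNormedModule)). intros z _.
  apply continuity_pt_filterlim. apply H.
Qed.

Lemma RInt_abs_const g a b M : gcont g ->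
  (forall t, Rmin a b <= t <= Rmax a b -> Rabs (g t) <= M) ->
  Rabs (RInt g a b) <= Rabs (b - a) * M.
Proof.
  intros Hg HM. destruct (Rle_dec a b) as [Hab|Hab].
  - rewrite (Rabs_right (b - a)) by lra. apply abs_RInt_le_const; auto.
    apply gcont_ex_RInt; auto. intros t Ht. apply HM.
    rewrite Rmin_left, Rmax_right; lra.
  - rewrite <- opp_RInt_swap by (apply gcont_ex_RInt; auto).
    change (opp (RInt g b a)) with (- RInt g b a). rewrite Rabs_Ropp.
    rewrite (Rabs_left (b - a)) by lra. replace (- (b - a)) with (a - b) by ring.
    apply abs_RInt_le_const; [lra| apply gcont_ex_RInt; auto|].
    intros t Ht. apply HM. rewrite Rmin_right, Rmax_left; lra.
Qed.

Lemma RInt_diff g x0 x x' : gcont g ->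
  RInt g x0 x - RInt g x0 x' = RInt g x' x.
Proof.
  intros Hg. rewrite <- (RInt_Chasles g x0 x' x) by (apply gcont_ex_RInt; auto).
  change (plus (RInt g x0 x') (RInt g x' x)) with (RInt g x0 x' + RInt g x' x). ring.
Qed.

Lemma RInt_lip g x0 M : gcont g -> (forall t, Rabs (g t) <= M) ->
  forall x x', Rabs (RInt g x0 x - RInt g x0 x') <= M * Rabs (x - x').
Proof.
  intros Hg HM x x'. rewrite RInt_diff by auto. rewrite Rmult_comm.
  apply RInt_abs_const; auto.
Qed.

Lemma lip_cont (y : R -> R) M : (forall x x', Rabs (y x - y x') <= M * Rabs (x - x')) -> gcont y.
Proof.
  intros H x eps Heps. exists (eps / (Rabs M + 1)). split.
  { apply Rdiv_lt_0_compat; [lra| pose proof (Rabs_pos M); lra]. }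
  intros z [_ Hz]. simpl in *. unfold R_dist in *.
  eapply Rle_lt_trans; [apply H|].
  assert (HM : M <= Rabs M) by apply RRle_abs.
  pose proof (Rabs_pos M). pose proof (Rabs_pos (z - x)).
  apply Rle_lt_trans with ((Rabs M + 1) * Rabs (z - x)).
  { apply Rmult_le_compat_r; lra. }
  apply Rmult_lt_reg_r with (/ (Rabs M + 1)). { apply Rinv_0_lt_compat; lra. }
  replace ((Rabs M + 1) * Rabs (z - x) * / (Rabs M + 1)) with (Rabs (z - x)) by (field; lra).
  exact Hz.
Qed.

Lemma RInt_le_anti g Phi psi a b : a <= b -> gcont g -> gcont psi ->
  (forall t, a <= t <= b -> is_derive Phi t (psi t)) ->
  (forall t, a <= t <= b -> Rabs (g t) <= psi t) ->
  Rabs (RInt g a b) <= Phi b - Phi a.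
Proof.
  intros Hab Hg Hp HPhi Hle.
  eapply Rle_trans; [apply abs_RInt_le; auto; apply gcont_ex_RInt; auto|].
  assert (HR : RInt psi a b = Phi b - Phi a).
  { apply is_RInt_unique. apply (is_RInt_derive Phi psi).
    - intros t Ht. rewrite Rmin_left, Rmax_right in Ht by lra. auto.
    - intros t _. apply continuity_pt_filterlim. apply Hp. }
  rewrite <- HR. apply RInt_le; auto.
  - apply gcont_ex_RInt. intros x. apply (continuity_pt_comp g Rabs); auto. apply Rcontinuity_abs.
  - apply gcont_ex_RInt; auto.
  - intros t Ht. apply Hle; lra.
Qed.

Lemma gcont_derive (f : R -> R) : (forall x, ex_derive f x) -> gcont f.
Proof. intros H x. apply derivable_continuous_pt, ex_derive_Reals_0, H. Qed.

Fixpoint pic (G : R -> R -> R) (x0 y0 : R) (n : nat) : R -> R :=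
  match n with
  | O => fun _ => y0
  | S n => fun x => y0 + RInt (fun t => G t (pic G x0 y0 n t)) x0 x
  end.

Definition Eb K x0 x := exp (2 * K * Rabs (x - x0)).

Lemma small_le A B C : 0 <= C -> (forall n, A <= B + C * (/2) ^ n) -> A <= B.
Proof.
  intros HC H. destruct (Rle_dec A B) as [|Hn]; auto. exfalso.
  destruct (pow_lt_1_zero (/2) ltac:(rewrite Rabs_right; lra) ((A - B) / (C + 1)))
    as [N HN].
  { apply Rdiv_lt_0_compat; lra. }
  specialize (HN N (le_n N)). specialize (H N).
  rewrite Rabs_right in HN by (apply Rle_ge, pow_le; lra).
  assert (C * (/2)^N <= (C + 1) * (/ 2) ^ N).
  { apply Rmult_le_compat_r; [apply pow_le; lra| lra]. }
  assert ((C + 1) * (/ 2) ^ N < A - B).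
  { apply Rmult_lt_reg_r with (/ (C + 1)). apply Rinv_0_lt_compat; lra.
    replace ((C + 1) * (/ 2) ^ N * / (C + 1)) with ((/2)^N) by (field; lra). exact HN. }
  lra.
Qed.

Lemma lim_bound u (l : R) n a B : is_lim_seq u l -> (forall k, Rabs (u (n + k)%nat - a) <= B) ->
  Rabs (l - a) <= B.
Proof.
  intros Hl Hb. destruct (Rle_dec (Rabs (l - a)) B) as [|Hn]; auto. exfalso.
  apply is_lim_seq_spec in Hl. simpl in Hl.
  destruct (Hl (mkposreal (Rabs (l - a) - B) ltac:(lra))) as [N HN]. simpl in HN.
  specialize (HN (n + N)%nat ltac:(lia)). specialize (Hb N).
  assert (Rabs (l - a) <= Rabs (u (n + N)%nat - l) + Rabs (u (n + N)%nat - a)).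
  { replace (l - a) with (- (u (n + N)%nat - l) + (u (n + N)%nat - a)) by ring.
    eapply Rle_trans; [apply Rabs_triang|]. rewrite Rabs_Ropp. lra. }
  lra.
Qed.

Lemma bielecki_int K x0 g C x : 0 < K -> 0 <= C -> gcont g ->
  (forall t, Rabs (g t) <= C * Eb K x0 t) ->
  Rabs (RInt g x0 x) <= C / (2 * K) * Eb K x0 x.
Proof.
  intros HK HC Hg Hb. unfold Eb in *.
  destruct (Rle_dec x0 x) as [Hx|Hx].
  - eapply Rle_trans.
    + apply (RInt_le_anti g (fun t => C / (2 * K) * exp (2 * K * (t - x0)))
                         (fun t => C * exp (2 * K * (t - x0)))); auto.
      * apply gcont_derive. intros; auto_derive; auto.
      * intros t _. auto_derive; auto. unfold Rminus. field. lra.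
      * intros t Ht. specialize (Hb t). rewrite (Rabs_right (t - x0)) in Hb by lra. exact Hb.
    + rewrite (Rabs_right (x - x0)) by lra. replace (2 * K * (x0 - x0)) with 0 by ring. rewrite exp_0. 
      assert (0 <= C / (2 * K)) by (apply Rmult_le_pos; [lra| left; apply Rinv_0_lt_compat; lra]). lra.
  - rewrite <- opp_RInt_swap by (apply gcont_ex_RInt; auto).
    change (opp (RInt g x x0)) with (- RInt g x x0). rewrite Rabs_Ropp.
    eapply Rle_trans.
    + apply (RInt_le_anti g (fun t => - (C / (2 * K)) * exp (2 * K * (x0 - t)))
                         (fun t => C * exp (2 * K * (x0 - t)))); auto; try lra.
      * apply gcont_derive. intros; auto_derive; auto.
      * intros t _. auto_derive; auto. unfold Rminus. field. lra.
      * intros t Ht. specialize (Hb t). rewrite (Rabs_left1 (t - x0)) in Hb by lra.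
        replace (- (t - x0)) with (x0 - t) in Hb by ring. exact Hb.
    + rewrite (Rabs_left (x - x0)) by lra. replace (- (x - x0)) with (x0 - x) by ring.
      replace (2 * K * (x0 - x0)) with 0 by ring. rewrite exp_0.
      assert (0 <= C / (2 * K)) by (apply Rmult_le_pos; [lra| left; apply Rinv_0_lt_compat; lra]). lra.
Qed.

Lemma raux1 (a b : R) : a + b - a = b. Proof. ring. Qed.
Lemma raux2 (a b c : R) : a + b - (a + c) = b - c. Proof. ring. Qed.

Lemma picard (G : R -> R -> R) K M x0 y0 :
  0 < K ->
  (forall t z1 z2, Rabs (G t z1 - G t z2) <= K * Rabs (z1 - z2)) ->
  (forall t z, Rabs (G t z) <= M) ->
  (forall y, gcont y -> gcont (fun t => G t (y t))) ->
  exists y, gcont y /\ y x0 = y0 /\ forall x, is_derive y x (G x (y x)).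
Proof.
  intros HK HL HM HC.
  assert (HM0 : 0 <= M) by (specialize (HM 0 0); pose proof (Rabs_pos (G 0 0)); lra).
  set (p := pic G x0 y0).
  assert (Hpc : forall n, gcont (p n)).
  { induction n.
    - intros x. apply continuity_pt_const. intros u v. reflexivity.
    - apply (lip_cont _ M). intros x x'. unfold p; cbn [pic].
      replace (y0 + RInt (fun t => G t (pic G x0 y0 n t)) x0 x -
               (y0 + RInt (fun t => G t (pic G x0 y0 n t)) x0 x'))
        with (RInt (fun t => G t (pic G x0 y0 n t)) x0 x -
               RInt (fun t => G t (pic G x0 y0 n t)) x0 x') by ring.
      apply RInt_lip; auto. }
  set (D := M / (2 * K)).
  assert (HD : 0 <= D) by (apply Rmult_le_pos; [lra| left; apply Rinv_0_lt_compat; lra]).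
  assert (HE1 : forall x, 1 <= Eb K x0 x).
  { intros x. unfold Eb. pose proof (exp_ineq1_le (2 * K * Rabs (x - x0))).
    pose proof (Rabs_pos (x - x0)). assert (0 <= 2 * K * Rabs (x - x0)) by (apply Rmult_le_pos; lra). lra. }
  assert (Hstep : forall n x, Rabs (p (S n) x - p n x) <= D * (/2)^n * Eb K x0 x).
  { induction n; intros x.
    - unfold p; cbn [pic]. rewrite pow_O, Rmult_1_r.
      rewrite raux1.
      eapply Rle_trans. { apply RInt_abs_const; [apply (HC (fun _ => y0)); intros u; apply continuity_pt_const; intros a b; auto|]. intros; apply HM. }
      unfold D, Eb. pose proof (exp_ineq1_le (2 * K * Rabs (x - x0))).
      pose proof (Rabs_pos (x - x0)).
      assert (HX : M / (2 * K) * (1 + 2 * K * Rabs (x - x0)) = M / (2 * K) + Rabs (x - x0) * M) by (field; lra).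
      assert (HY : M / (2 * K) * (1 + 2 * K * Rabs (x - x0)) <= M / (2 * K) * exp (2 * K * Rabs (x - x0))).
      { apply Rmult_le_compat_l; auto. }
      fold D in HX, HY |- *. lra.
    - change (p (S (S n)) x) with (y0 + RInt (fun t => G t (p (S n) t)) x0 x).
      change (p (S n) x) with (y0 + RInt (fun t => G t (p n t)) x0 x).
      replace (y0 + RInt (fun t => G t (p (S n) t)) x0 x - (y0 + RInt (fun t => G t (p n t)) x0 x))
        with (RInt (fun t => G t (p (S n) t) - G t (p n t)) x0 x).
      2: { rewrite (RInt_minus (V:=R_CompleteNormedModule)) by (apply gcont_ex_RInt, HC, Hpc). unfold minus, plus, opp; simpl; ring. }
      eapply Rle_trans.
      + apply (bielecki_int K x0 _ (K * (D * (/2)^n))); auto.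
        * apply Rmult_le_pos; [lra| apply Rmult_le_pos; [lra| apply pow_le; lra]].
        * intros u. apply continuity_pt_minus; apply HC, Hpc.
        * intros t. eapply Rle_trans; [apply HL|]. rewrite Rmult_assoc. apply Rmult_le_compat_l; [lra|]. apply IHn.
      + simpl. right. field. lra. }
  assert (Hcau : forall n k x, Rabs (p (n + k)%nat x - p n x) <= 2 * D * ((/2)^n - (/2)^(n+k)) * Eb K x0 x).
  { intros n k x. induction k.
    - rewrite Nat.add_0_r. unfold Rminus. rewrite Rplus_opp_r, Rabs_R0. lra.
    - rewrite Nat.add_succ_r.
      replace (p (S (n + k)) x - p n x) with ((p (S (n + k)) x - p (n + k)%nat x) + (p (n + k)%nat x - p n x)) by ring.
      eapply Rle_trans; [apply Rabs_triang|].
      specialize (Hstep (n + k)%nat x). simpl pow. simpl pow in Hstep.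
      assert (HH : D * (/ 2) ^ (n + k) * Eb K x0 x + 2 * D * ((/ 2) ^ n - (/ 2) ^ (n + k)) * Eb K x0 x
                  = 2 * D * ((/ 2) ^ n - / 2 * (/ 2) ^ (n + k)) * Eb K x0 x) by field.
      lra. }
  assert (Hcau2 : forall n k x, Rabs (p (n + k)%nat x - p n x) <= 2 * D * (/2)^n * Eb K x0 x).
  { intros n k x. eapply Rle_trans; [apply Hcau|].
    apply Rmult_le_compat_r; [pose proof (HE1 x); lra|]. apply Rmult_le_compat_l; [lra|].
    pose proof (pow_le (/2) (n + k) ltac:(lra)). lra. }
  assert (Hex : forall x, exists l : R, is_lim_seq (fun n => p n x) l).
  { intros x. apply ex_lim_seq_cauchy_corr. intros eps.
    destruct (pow_lt_1_zero (/2) ltac:(rewrite Rabs_right; lra) (eps / (4 * D * Eb K x0 x + 1))) as [N HN].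
    { apply Rdiv_lt_0_compat. apply eps. pose proof (HE1 x). assert (0 <= 4 * D * Eb K x0 x) by (apply Rmult_le_pos; lra). lra. }
    exists N. intros n m Hn Hm.
    specialize (HN N (le_n N)). rewrite Rabs_right in HN by (apply Rle_ge, pow_le; lra).
    pose proof (Hcau2 N (n - N)%nat x) as H1. pose proof (Hcau2 N (m - N)%nat x) as H2.
    replace (N + (n - N))%nat with n in H1 by lia. replace (N + (m - N))%nat with m in H2 by lia.
    replace (p n x - p m x) with ((p n x - p N x) - (p m x - p N x)) by ring.
    eapply Rle_lt_trans; [apply Rabs_triang|]. rewrite Rabs_Ropp.
    assert (HX : 4 * D * (/ 2) ^ N * Eb K x0 x < eps).
    { pose proof (HE1 x). pose proof (pos eps).
      assert (HX2 : (/2)^N * (4 * D * Eb K x0 x + 1) < eps).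
      { apply Rmult_lt_reg_r with (/ (4 * D * Eb K x0 x + 1)).
        apply Rinv_0_lt_compat. assert (0 <= 4 * D * Eb K x0 x) by (apply Rmult_le_pos; lra). lra.
        replace ((/ 2) ^ N * (4 * D * Eb K x0 x + 1) * / (4 * D * Eb K x0 x + 1)) with ((/2)^N).
        exact HN. field. assert (0 <= 4 * D * Eb K x0 x) by (apply Rmult_le_pos; lra). lra. }
      pose proof (pow_le (/2) N ltac:(lra)). nra. }
    lra. }
  set (y := fun x => real (Lim_seq (fun n => p n x))).
  assert (Hy : forall x, is_lim_seq (fun n => p n x) (y x)).
  { intros x. destruct (Hex x) as [l Hl]. unfold y. rewrite (is_lim_seq_unique _ _ Hl). exact Hl. }
  assert (Hyb : forall n x, Rabs (y x - p n x) <= 2 * D * (/2)^n * Eb K x0 x).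
  { intros n x. apply (lim_bound _ _ n _ _ (Hy x)). intros k. apply Hcau2. }
  assert (Hylip : forall x x', Rabs (y x - y x') <= M * Rabs (x - x')).
  { intros x x'. apply (small_le _ _ (2 * D * (Eb K x0 x + Eb K x0 x'))).
    { pose proof (HE1 x); pose proof (HE1 x'). apply Rmult_le_pos; lra. }
    intros n.
    replace (y x - y x') with ((y x - p (S n) x) + (p (S n) x - p (S n) x') + (p (S n) x' - y x')) by ring.
    eapply Rle_trans; [apply Rabs_triang|].
    eapply Rle_trans; [apply Rplus_le_compat_r, Rabs_triang|].
    assert (H1 : Rabs (p (S n) x - p (S n) x') <= M * Rabs (x - x')).
    { change (p (S n) x) with (y0 + RInt (fun t => G t (p n t)) x0 x).
      change (p (S n) x') with (y0 + RInt (fun t => G t (p n t)) x0 x').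
      replace (y0 + RInt (fun t => G t (p n t)) x0 x - (y0 + RInt (fun t => G t (p n t)) x0 x'))
        with (RInt (fun t => G t (p n t)) x0 x - RInt (fun t => G t (p n t)) x0 x') by ring.
      apply RInt_lip; auto. }
    pose proof (Hyb (S n) x). pose proof (Hyb (S n) x').
    rewrite <- Rabs_Ropp in H0. replace (- (y x' - p (S n) x')) with (p (S n) x' - y x') in H0 by ring.
    simpl pow in H, H0.
    assert (0 <= (/2)^n) by (apply pow_le; lra).
    assert (E1 : 2 * D * (/ 2 * (/ 2) ^ n) * Eb K x0 x = D * (/ 2) ^ n * Eb K x0 x) by field.
    assert (E2 : 2 * D * (/ 2 * (/ 2) ^ n) * Eb K x0 x' = D * (/ 2) ^ n * Eb K x0 x') by field.
    assert (E3 : 0 <= D * (/ 2) ^ n * (Eb K x0 x + Eb K x0 x')).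
    { pose proof (HE1 x'). pose proof (HE1 x). apply Rmult_le_pos; [apply Rmult_le_pos|]; lra. }
    assert (E4 : 2 * D * (Eb K x0 x + Eb K x0 x') * (/ 2) ^ n = 2 * (D * (/ 2) ^ n * (Eb K x0 x + Eb K x0 x'))) by ring.
    assert (E5 : D * (/ 2) ^ n * (Eb K x0 x + Eb K x0 x') = D * (/ 2) ^ n * Eb K x0 x + D * (/ 2) ^ n * Eb K x0 x') by ring.
    lra. }
  assert (Hyc : gcont y) by (apply (lip_cont y M); auto).
  set (g := fun t => G t (y t)).
  assert (Hgc : gcont g) by (apply HC; auto).
  assert (Hfix : forall x, y x = y0 + RInt g x0 x).
  { intros x.
    assert (HI : forall n, Rabs (p (S n) x - (y0 + RInt g x0 x)) <= Rabs (x - x0) * (K * (2 * D * (/2)^n * Eb K x0 x))).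
    { intros n.
      change (p (S n) x) with (y0 + RInt (fun t => G t (p n t)) x0 x).
      rewrite raux2.
      replace (RInt (fun t => G t (p n t)) x0 x - RInt g x0 x)
         with (RInt (fun t => G t (p n t) - G t (y t)) x0 x : R).
      2: { rewrite (RInt_minus (V:=R_CompleteNormedModule)) by (apply gcont_ex_RInt; first [apply Hgc | apply HC, Hpc]).
           unfold minus, plus, opp, g; simpl; ring. }
      apply RInt_abs_const.
      { intros u; apply continuity_pt_minus; [apply HC, Hpc| apply Hgc]. }
      intros t Ht. eapply Rle_trans; [apply HL|]. apply Rmult_le_compat_l; [lra|].
      rewrite <- Rabs_Ropp; replace (- (p n t - y t)) with (y t - p n t) by ring.
      eapply Rle_trans; [apply Hyb|]. apply Rmult_le_compat_l.
      { apply Rmult_le_pos; [lra| apply pow_le; lra]. }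
      unfold Eb. destruct (Req_dec (Rabs (t - x0)) (Rabs (x - x0))) as [He|He].
      { rewrite He; lra. }
      left; apply exp_increasing; apply Rmult_lt_compat_l; [lra|].
      assert (Rabs (t - x0) <= Rabs (x - x0)).
      { unfold Rmin, Rmax in Ht; destruct Rle_dec in Ht; unfold Rabs; repeat destruct Rcase_abs; lra. }
      lra. }
    assert (HZ : Rabs (y x - (y0 + RInt g x0 x)) <= 0).
    { apply (small_le _ 0 (D * Eb K x0 x + Rabs (x - x0) * (K * (2 * D * Eb K x0 x)))).
      { pose proof (HE1 x); pose proof (Rabs_pos (x - x0)).
        assert (0 <= D * Eb K x0 x) by (apply Rmult_le_pos; lra).
        assert (0 <= K * (2 * D * Eb K x0 x)) by (apply Rmult_le_pos; [lra|]; apply Rmult_le_pos; lra).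
        assert (0 <= Rabs (x - x0) * (K * (2 * D * Eb K x0 x))) by (apply Rmult_le_pos; lra). lra. }
      intros n. specialize (HI n). pose proof (Hyb (S n) x) as Hb. simpl pow in Hb.
      replace (y x - (y0 + RInt g x0 x)) with ((y x - p (S n) x) + (p (S n) x - (y0 + RInt g x0 x))) by ring.
      eapply Rle_trans; [apply Rabs_triang|].
      assert (E1 : 2 * D * (/ 2 * (/ 2) ^ n) * Eb K x0 x = (D * Eb K x0 x) * (/ 2) ^ n) by field.
      assert (E2 : Rabs (x - x0) * (K * (2 * D * (/ 2) ^ n * Eb K x0 x)) = (Rabs (x - x0) * (K * (2 * D * Eb K x0 x))) * (/2)^n) by ring.
      assert (E3 : (D * Eb K x0 x + Rabs (x - x0) * (K * (2 * D * Eb K x0 x))) * (/ 2) ^ n =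
                   (D * Eb K x0 x) * (/ 2) ^ n + (Rabs (x - x0) * (K * (2 * D * Eb K x0 x))) * (/2)^n) by ring.
      lra. }
    pose proof (Rabs_pos (y x - (y0 + RInt g x0 x))).
    assert (Rabs (y x - (y0 + RInt g x0 x)) = 0) by lra.
    apply Rminus_diag_uniq. apply Rabs_eq_0. auto. }
  exists y. split; [exact Hyc|]. split.
  - rewrite Hfix. rewrite RInt_point. simpl. unfold zero; simpl. ring.
  - intros x. apply (is_derive_ext (fun x => y0 + RInt g x0 x)). { intros t. rewrite Hfix. reflexivity. }
    replace (G x (y x)) with (plus zero (g x)) by (unfold plus, zero, g; simpl; ring).
    apply (is_derive_plus (fun _ => y0) (fun x => RInt g x0 x)).
    + exact (is_derive_const (K:=R_AbsRing) (V:=R_NormedModule) y0 x).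
    + apply (is_derive_RInt g (fun x => RInt g x0 x) x0 x).
      * apply filter_forall. intros b. apply (RInt_correct (V:=R_CompleteNormedModule)). apply gcont_ex_RInt; auto.
      * apply continuity_pt_filterlim. apply Hgc.
Qed.

Lemma loc_of_delta (x d : R) (P : R -> Prop) : 0 < d -> (forall t, Rabs (t - x) < d -> P t) -> locally x P.
Proof.
  intros Hd H. exists (mkposreal d Hd). intros y Hy. apply H.
  unfold ball in Hy; simpl in Hy; unfold AbsRing_ball, abs, minus, plus, opp in Hy; simpl in Hy. exact Hy.
Qed.

Lemma cpt_delta (g : R -> R) x eps : continuity_pt g x -> 0 < eps ->
  exists d, 0 < d /\ forall t, Rabs (t - x) < d -> Rabs (g t - g x) < eps.
Proof.
  intros H He. destruct (H eps He) as [d [Hd H2]]. exists d. split; [lra|].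
  intros t Ht. destruct (Req_dec x t) as [<-|Hne]. { rewrite Rminus_diag, Rabs_R0; lra. }
  apply (H2 t). split; [split; [exact I| exact Hne]| exact Ht].
Qed.

Lemma derive_cpt f x l : is_derive f x l -> continuity_pt f x.
Proof. intros H. apply derivable_continuous_pt, ex_derive_Reals_0. exists l; auto. Qed.

Lemma dmax_sq d x l : is_derive d x l ->
  is_derive (fun t => Rmax (d t) 0 ^ 2) x (2 * Rmax (d x) 0 * l).
Proof.
  intros Hd. pose proof (derive_cpt _ _ _ Hd) as Hc.
  destruct (Rtotal_order (d x) 0) as [Hn|[H0|Hp]].
  - destruct (cpt_delta d x (- d x) Hc ltac:(lra)) as [e [He H]].
    rewrite Rmax_right by lra.
    apply (is_derive_ext_loc (fun _ => 0)).
    { apply (loc_of_delta x e); auto. intros t Ht. specialize (H t Ht).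
      rewrite Rmax_right. simpl; ring. unfold Rabs in H; destruct Rcase_abs in H; lra. }
    replace (2 * 0 * l) with (zero : R) by (unfold zero; simpl; ring).
    exact (is_derive_const (K:=R_AbsRing) (V:=R_NormedModule) 0 x).
  - rewrite H0, Rmax_right by lra. replace (2 * 0 * l) with 0 by ring.
    apply is_derive_Reals. apply is_derive_Reals in Hd. intros eps Heps.
    destruct (Hd 1 ltac:(lra)) as [d1 Hd1].
    destruct (cpt_delta d x (eps / (Rabs l + 2)) Hc) as [d2 [Hd2 H2]].
    { apply Rdiv_lt_0_compat; [lra| pose proof (Rabs_pos l); lra]. }
    assert (Hd1p := cond_pos d1).
    exists (mkposreal (Rmin d1 d2) (Rmin_pos _ _ Hd1p Hd2)). simpl. intros hh Hh Hhd.
    assert (Hm1 := Rmin_l d1 d2). assert (Hm2 := Rmin_r d1 d2).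
    specialize (Hd1 hh Hh ltac:(lra)). rewrite H0 in Hd1.
    specialize (H2 (x + hh) ltac:(replace (x + hh - x) with hh by ring; lra)). rewrite H0 in H2.
    rewrite H0, (Rmax_right 0 0) by lra. replace (0 ^ 2) with 0 by ring. rewrite Rminus_0_r in *.
    assert (Habs : Rabs (d (x + hh) / hh) <= Rabs l + 1).
    { replace (d (x + hh) / hh) with ((d (x + hh) / hh - l) + l) by ring.
      eapply Rle_trans; [apply Rabs_triang|]. lra. }
    assert (Hq : Rabs (Rmax (d (x + hh)) 0 ^ 2 / hh) <= Rabs (d (x + hh)) * Rabs (d (x + hh) / hh)).
    { unfold Rmax; destruct Rle_dec.
      - replace (0 ^ 2 / hh) with 0 by (unfold Rdiv; ring). rewrite Rabs_R0.
        apply Rmult_le_pos; apply Rabs_pos.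
      - replace (d (x + hh) ^ 2 / hh) with (d (x + hh) * (d (x + hh) / hh)) by (unfold Rdiv; ring).
        rewrite Rabs_mult. right; reflexivity. }
    try rewrite Rminus_0_r. match goal with |- Rabs (?A / hh) < _ => replace A with (Rmax (d (x+hh)) 0 ^ 2) by ring end.
    eapply Rle_lt_trans; [exact Hq|].
    apply Rle_lt_trans with (eps / (Rabs l + 2) * (Rabs l + 1)).
    { apply Rmult_le_compat; try apply Rabs_pos; lra. }
    pose proof (Rabs_pos l).
    apply Rmult_lt_reg_r with (Rabs l + 2). lra.
    replace (eps / (Rabs l + 2) * (Rabs l + 1) * (Rabs l + 2)) with (eps * (Rabs l + 1)) by (field; lra).
    nra.
  - destruct (cpt_delta d x (d x) Hc ltac:(lra)) as [e [He H]].
    rewrite Rmax_left by lra.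
    apply (is_derive_ext_loc (fun t => d t ^ 2)).
    { apply (loc_of_delta x e); auto. intros t Ht. specialize (H t Ht).
      rewrite Rmax_left. reflexivity. unfold Rabs in H; destruct Rcase_abs in H; lra. }
    replace (2 * d x * l) with (INR 2 * l * d x ^ Init.Nat.pred 2) by (simpl; ring).
    apply is_derive_pow; auto.
Qed.

Lemma cont_on_comp a b d (phi : R -> R) : cont_on a b d -> (forall v, continuity_pt phi v) ->
  cont_on a b (fun x => phi (d x)).
Proof.
  intros Hd Hp x Hx eps Heps.
  destruct (cpt_delta phi (d x) eps (Hp (d x)) Heps) as [e [He H]].
  destruct (Hd x Hx e He) as [dl [Hdl H2]].
  exists dl; split; auto.
Qed.

Lemma cont_on_plus a b f g : cont_on a b f -> cont_on a b g -> cont_on a b (fun x => f x + g x).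
Proof.
  intros Hf Hg x Hx eps Heps.
  destruct (Hf x Hx (eps/2) ltac:(lra)) as [d1 [Hd1 H1]].
  destruct (Hg x Hx (eps/2) ltac:(lra)) as [d2 [Hd2 H2]].
  exists (Rmin d1 d2); split; [apply Rmin_pos; auto|]. intros y Hy Hyx.
  assert (Hm1 := Rmin_l d1 d2). assert (Hm2 := Rmin_r d1 d2).
  specialize (H1 y Hy ltac:(lra)). specialize (H2 y Hy ltac:(lra)).
  replace (f y + g y - (f x + g x)) with ((f y - f x) + (g y - g x)) by ring.
  eapply Rle_lt_trans; [apply Rabs_triang|]. lra.
Qed.

Lemma cont_on_opp a b f : cont_on a b f -> cont_on a b (fun x => - f x).
Proof.
  intros Hf x Hx eps Heps. destruct (Hf x Hx eps Heps) as [d [Hd H]].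
  exists d; split; auto. intros y Hy Hyx. replace (- f y - - f x) with (- (f y - f x)) by ring.
  rewrite Rabs_Ropp. auto.
Qed.

Lemma cont_on_minus a b f g : cont_on a b f -> cont_on a b g -> cont_on a b (fun x => f x - g x).
Proof. intros Hf Hg. apply (cont_on_plus a b f (fun x => - g x)); auto. apply cont_on_opp; auto. Qed.

Lemma cont_on_glob a b g : (forall x, continuity_pt g x) -> cont_on a b g.
Proof. intros H. apply cont_of_pt. intros; auto. Qed.

Lemma cont_on_lin a b al be : cont_on a b (fun x => al + be * x).
Proof.
  apply cont_on_glob. intros x. apply derive_cpt with be.
  auto_derive; auto. ring.
Qed.

Lemma cont_on_ext a b f g : cont_on a b f -> (forall x, a <= x <= b -> f x = g x) -> cont_on a b g.
Proof.
  intros Hf He x Hx eps Heps. destruct (Hf x Hx eps Heps) as [d [Hd H]].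
  exists d; split; auto. intros y Hy Hyx. rewrite <- !He by auto. auto.
Qed.

Lemma msq_cont : forall v, continuity_pt (fun v => Rmax v 0 ^ 2) v.
Proof.
  intros v. apply derive_cpt with (2 * Rmax v 0 * 1).
  apply (dmax_sq (fun v => v) v 1). exact (is_derive_id (K:=R_AbsRing) v).
Qed.

Lemma pos_back s t d : s <= t -> cont_on s t d ->
  (forall x, s < x < t -> exists l, is_derive d x l /\ (0 < d x -> 0 <= l)) ->
  d t <= 0 -> forall x, s <= x <= t -> d x <= 0.
Proof.
  intros Hst Hc Hd Ht x Hx.
  assert (Hm : Rmax (d x) 0 ^ 2 <= Rmax (d t) 0 ^ 2).
  { apply (mono_le x t (fun v => Rmax (d v) 0 ^ 2)); [lra| |].
    - apply (cont_on_comp x t d (fun v => Rmax v 0 ^ 2)). apply (cont_on_sub s t); auto; lra.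
      apply msq_cont.
    - intros y Hy. destruct (Hd y ltac:(lra)) as [l [Hl Hl2]].
      exists (2 * Rmax (d y) 0 * l). split. apply dmax_sq; auto.
      unfold Rmax; destruct Rle_dec; [lra|]. apply Rmult_le_pos; [lra|]. apply Hl2; lra. }
  rewrite (Rmax_right (d t) 0) in Hm by lra.
  unfold Rmax in Hm; destruct Rle_dec; [lra|]. nra.
Qed.

Lemma pos_fwd s t d : s <= t -> cont_on s t d ->
  (forall x, s < x < t -> exists l, is_derive d x l /\ (0 < d x -> l <= 0)) ->
  d s <= 0 -> forall x, s <= x <= t -> d x <= 0.
Proof.
  intros Hst Hc Hd Ht x Hx.
  assert (Hm : - (Rmax (d s) 0 ^ 2) <= - (Rmax (d x) 0 ^ 2)).
  { apply (mono_le s x (fun v => - (Rmax (d v) 0 ^ 2))); [lra| |].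
    - apply cont_on_opp. apply (cont_on_comp s x d (fun v => Rmax v 0 ^ 2)). apply (cont_on_sub s t); auto; lra.
      apply msq_cont.
    - intros y Hy. destruct (Hd y ltac:(lra)) as [l [Hl Hl2]].
      exists (- (2 * Rmax (d y) 0 * l)). split. apply (is_derive_opp (fun v => Rmax (d v) 0 ^ 2)). apply dmax_sq; auto.
      unfold Rmax; destruct Rle_dec; [lra|]. assert (l <= 0) by (apply Hl2; lra). nra. }
  rewrite (Rmax_right (d s) 0) in Hm by lra.
  unfold Rmax in Hm; destruct Rle_dec; [lra|]. nra.
Qed.

Definition Fq (h q : R -> R) (c x z : R) := h x - c - q x / z.

Definition supsol h q c a r V := forall x, a < x < r -> exists l, is_derive V x l /\ Fq h q c x (V x) <= l.
Definition subsol h q c a r V := forall x, a < x < r -> exists l, is_derive V x l /\ l <= Fq h q c x (V x).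

Lemma F_mono h q c x v w : 0 <= q x -> v <= w -> w < 0 -> Fq h q c x v <= Fq h q c x w.
Proof.
  intros Hq Hvw Hw. unfold Fq. assert (q x / w <= q x / v).
  { unfold Rdiv. apply Rmult_le_compat_l; auto.
    apply Rmult_le_reg_r with (- v * - w). nra.
    replace (/ w * (- v * - w)) with v by (field; lra).
    replace (/ v * (- v * - w)) with w by (field; lra). lra. }
  lra.
Qed.

Lemma cpt_Rmax f g x : continuity_pt f x -> continuity_pt g x -> continuity_pt (fun t => Rmax (f t) (g t)) x.
Proof.
  intros Hf Hg eps Heps.
  destruct (cpt_delta f x eps Hf Heps) as [d1 [Hd1 H1]].
  destruct (cpt_delta g x eps Hg Heps) as [d2 [Hd2 H2]].
  exists (Rmin d1 d2). split; [apply Rmin_pos; auto|]. intros y [_ Hy]. simpl in *. unfold R_dist in *.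
  assert (Hm1 := Rmin_l d1 d2). assert (Hm2 := Rmin_r d1 d2).
  specialize (H1 y ltac:(lra)). specialize (H2 y ltac:(lra)).
  revert H1 H2. unfold Rmax; repeat destruct Rle_dec; unfold Rabs; repeat destruct Rcase_abs; lra.
Qed.

Lemma cpt_Rmin f g x : continuity_pt f x -> continuity_pt g x -> continuity_pt (fun t => Rmin (f t) (g t)) x.
Proof.
  intros Hf Hg eps Heps.
  destruct (cpt_delta f x eps Hf Heps) as [d1 [Hd1 H1]].
  destruct (cpt_delta g x eps Hg Heps) as [d2 [Hd2 H2]].
  exists (Rmin d1 d2). split; [apply Rmin_pos; auto|]. intros y [_ Hy]. simpl in *. unfold R_dist in *.
  assert (Hm1 := Rmin_l d1 d2). assert (Hm2 := Rmin_r d1 d2).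
  specialize (H1 y ltac:(lra)). specialize (H2 y ltac:(lra)).
  revert H1 H2. unfold Rmin; repeat destruct Rle_dec; unfold Rabs; repeat destruct Rcase_abs; lra.
Qed.

Lemma con_gen h q c a r lo hi x0 y0 d :
  a < r -> cont_on a r h -> cont_on a r q -> (forall x, a <= x <= r -> 0 <= q x) ->
  cont_on a r lo -> cont_on a r hi -> (forall x, a <= x <= r -> lo x <= hi x) ->
  0 < d -> (forall x, a <= x <= r -> hi x <= - d) -> a <= x0 <= r ->
  exists y, cont_on a r y /\ y x0 = y0 /\
    forall x, a < x < r -> is_derive y x (h x - c - q x / Rmax (lo x) (Rmin (y x) (hi x))).
Proof.
  intros Har Hh Hq Hq0 Hlo Hhi Hlh Hd Hhd Hx0.
  destruct (cont_on_bound a r h ltac:(lra) Hh) as [Hm HHm].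
  destruct (cont_on_bound a r q ltac:(lra) Hq) as [Qm HQm].
  set (hh := fun t => h (clampx a r t)). set (qq := fun t => q (clampx a r t)).
  set (ll := fun t => lo (clampx a r t)). set (uu := fun t => hi (clampx a r t)).
  set (cl := fun z t => Rmax (ll t) (Rmin z (uu t))).
  set (G := fun t z => hh t - c - qq t / cl z t).
  assert (Hin : forall t, a <= clampx a r t <= r) by (intros; apply clampx_in; lra).
  assert (Hcl : forall z t, cl z t <= - d).
  { intros z t. unfold cl, ll, uu. pose proof (Hlh _ (Hin t)). pose proof (Hhd _ (Hin t)).
    unfold Rmax, Rmin; repeat destruct Rle_dec; lra. }
  assert (Hcll : forall z1 z2 t, Rabs (cl z1 t - cl z2 t) <= Rabs (z1 - z2)).
  { intros. unfold cl. unfold Rmax, Rmin; repeat destruct Rle_dec; unfold Rabs; repeat destruct Rcase_abs; lra. }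
  assert (HQ0 : 0 <= Qm) by (specialize (HQm a ltac:(lra)); pose proof (Rabs_pos (q a)); lra).
  assert (Hqq : forall t, 0 <= qq t <= Qm).
  { intros t. unfold qq. split. apply Hq0; auto. specialize (HQm _ (Hin t)).
    eapply Rle_trans; [apply RRle_abs| exact HQm]. }
  destruct (picard G (Qm / (d * d) + 1) (Hm + Rabs c + Qm / d) x0 y0) as [y [Hyc [Hy0 Hyd]]].
  - assert (0 <= Qm / (d * d)) by (apply Rmult_le_pos; auto; left; apply Rinv_0_lt_compat; nra). lra.
  - intros t z1 z2. unfold G.
    pose proof (Hcl z1 t). pose proof (Hcl z2 t). pose proof (Hcll z1 z2 t). pose proof (Hqq t).
    replace (hh t - c - qq t / cl z1 t - (hh t - c - qq t / cl z2 t))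
      with (qq t * (cl z1 t - cl z2 t) / (cl z1 t * cl z2 t)) by (field; lra).
    unfold Rdiv. rewrite !Rabs_mult. rewrite Rabs_Rinv by nra.
    rewrite (Rabs_right (qq t)) by lra.
    rewrite (Rabs_right (cl z1 t * cl z2 t)) by nra.
    assert (Hdd : d * d <= cl z1 t * cl z2 t) by nra.
    assert (Hi : / (cl z1 t * cl z2 t) <= / (d * d)) by (apply Rinv_le_contravar; nra).
    assert (0 < / (cl z1 t * cl z2 t)) by (apply Rinv_0_lt_compat; nra).
    pose proof (Rabs_pos (cl z1 t - cl z2 t)). pose proof (Rabs_pos (z1 - z2)).
    assert (qq t * Rabs (cl z1 t - cl z2 t) * / (cl z1 t * cl z2 t) <= Qm * Rabs (z1 - z2) * / (d * d)).
    { apply Rmult_le_compat; try nra; try (apply Rmult_le_pos; lra). }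
    assert (Qm * Rabs (z1 - z2) * / (d * d) = Qm * / (d * d) * Rabs (z1 - z2)) by ring.
    nra.
  - intros t z. unfold G. pose proof (Hcl z t). pose proof (Hqq t).
    specialize (HHm _ (Hin t)). fold (hh t) in HHm.
    assert (Rabs (qq t / cl z t) <= Qm / d).
    { unfold Rdiv. rewrite Rabs_mult, Rabs_Rinv by lra. rewrite (Rabs_right (qq t)) by lra.
      rewrite (Rabs_left (cl z t)) by lra.
      apply Rmult_le_compat; try lra. left; apply Rinv_0_lt_compat; lra.
      apply Rinv_le_contravar; lra. }
    unfold Rminus. eapply Rle_trans; [apply Rabs_triang|]. rewrite Rabs_Ropp.
    eapply Rle_trans; [apply Rplus_le_compat_r, Rabs_triang|]. rewrite Rabs_Ropp. lra.
  - intros yy Hyy t. unfold G, cl.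
    assert (Hh' : continuity_pt hh t) by (apply cont_hat; auto; lra).
    assert (Hq' : continuity_pt qq t) by (apply cont_hat; auto; lra).
    assert (Hl' : continuity_pt ll t) by (apply cont_hat; auto; lra).
    assert (Hu' : continuity_pt uu t) by (apply cont_hat; auto; lra).
    assert (Hc' : continuity_pt (fun t => Rmax (ll t) (Rmin (yy t) (uu t))) t).
    { apply cpt_Rmax; auto. apply cpt_Rmin; auto. }
    assert (Hk : continuity_pt (fun _ => c) t) by (apply continuity_pt_const; intros u v; auto).
    apply (continuity_pt_minus (fun t => hh t - c) (fun t => qq t / Rmax (ll t) (Rmin (yy t) (uu t)))).
    apply (continuity_pt_minus hh (fun _ => c)); auto.
    apply (continuity_pt_div qq (fun t => Rmax (ll t) (Rmin (yy t) (uu t)))); auto.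
    pose proof (Hcl (yy t) t). unfold cl in H. lra.
  - exists y. split; [apply cont_on_glob; auto|]. split; auto.
    intros x Hx. specialize (Hyd x). unfold G, cl, hh, qq, ll, uu in Hyd.
    rewrite clampx_id in Hyd by lra. exact Hyd.
Qed.

Lemma con_dir (back : bool) h q c a r lo hi y0 d :
  a < r -> cont_on a r h -> cont_on a r q -> (forall x, a <= x <= r -> 0 <= q x) ->
  cont_on a r lo -> cont_on a r hi -> (forall x, a <= x <= r -> lo x <= hi x) ->
  0 < d -> (forall x, a <= x <= r -> hi x <= - d) ->
  (if back then supsol h q c a r lo else subsol h q c a r lo) ->
  (if back then subsol h q c a r hi else supsol h q c a r hi) ->
  lo (if back then r else a) <= y0 <= hi (if back then r else a) ->
  exists y, cont_on a r y /\ y (if back then r else a) = y0 /\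
    (forall x, a <= x <= r -> lo x <= y x <= hi x) /\
    forall x, a < x < r -> is_derive y x (Fq h q c x (y x)).
Proof.
  intros Har Hh Hq Hq0 Hlo Hhi Hlh Hd Hhd Hslo Hshi Hy0.
  destruct (con_gen h q c a r lo hi (if back then r else a) y0 d) as [y [Hyc [Hy0' Hyd]]]; auto.
  { destruct back; lra. }
  assert (Hb : forall x, a <= x <= r -> lo x <= y x <= hi x).
  { intros x Hx. split.
    - cut (lo x - y x <= 0); [lra|].
      destruct back.
      + apply (pos_back a r (fun x => lo x - y x)); auto; [lra| apply cont_on_minus; auto| |rewrite Hy0'; lra].
        intros z Hz. destruct (Hslo z Hz) as [l [Hl Hl2]].
        eexists. split. apply (is_derive_minus lo y); [exact Hl| apply Hyd; auto].
        intros Hp. unfold Fq in Hl2. unfold minus, plus, opp; simpl.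
        rewrite Rmin_left by (pose proof (Hlh z ltac:(lra)); lra). rewrite Rmax_left by lra. lra.
      + apply (pos_fwd a r (fun x => lo x - y x)); auto; [lra| apply cont_on_minus; auto| |rewrite Hy0'; lra].
        intros z Hz. destruct (Hslo z Hz) as [l [Hl Hl2]].
        eexists. split. apply (is_derive_minus lo y); [exact Hl| apply Hyd; auto].
        intros Hp. unfold Fq in Hl2. unfold minus, plus, opp; simpl.
        rewrite Rmin_left by (pose proof (Hlh z ltac:(lra)); lra). rewrite Rmax_left by lra. lra.
    - cut (y x - hi x <= 0); [lra|].
      destruct back.
      + apply (pos_back a r (fun x => y x - hi x)); auto; [lra| apply cont_on_minus; auto| |rewrite Hy0'; lra].
        intros z Hz. destruct (Hshi z Hz) as [l [Hl Hl2]].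
        eexists. split. apply (is_derive_minus y hi); [apply Hyd; auto| exact Hl].
        intros Hp. unfold Fq in Hl2. unfold minus, plus, opp; simpl.
        rewrite Rmin_right by lra. rewrite Rmax_right by (apply Hlh; lra). lra.
      + apply (pos_fwd a r (fun x => y x - hi x)); auto; [lra| apply cont_on_minus; auto| |rewrite Hy0'; lra].
        intros z Hz. destruct (Hshi z Hz) as [l [Hl Hl2]].
        eexists. split. apply (is_derive_minus y hi); [apply Hyd; auto| exact Hl].
        intros Hp. unfold Fq in Hl2. unfold minus, plus, opp; simpl.
        rewrite Rmin_right by lra. rewrite Rmax_right by (apply Hlh; lra). lra. }
  exists y. split; auto. split; auto. split; auto.
  intros x Hx. specialize (Hyd x Hx). destruct (Hb x ltac:(lra)) as [H1 H2].
  rewrite Rmin_left, Rmax_right in Hyd by lra. exact Hyd.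
Qed.

Definition issol h q c s t V := forall x, s < x < t -> is_derive V x (Fq h q c x (V x)).

Lemma sol_sub h q c s t V : issol h q c s t V -> subsol h q c s t V.
Proof. intros H x Hx. exists (Fq h q c x (V x)). split; auto; lra. Qed.
Lemma sol_sup h q c s t V : issol h q c s t V -> supsol h q c s t V.
Proof. intros H x Hx. exists (Fq h q c x (V x)). split; auto; lra. Qed.

Lemma cmp_back h q c s t V1 V2 : s <= t -> cont_on s t V1 -> cont_on s t V2 ->
  (forall x, s < x < t -> V1 x < 0 /\ V2 x < 0 /\ 0 <= q x) ->
  subsol h q c s t V1 -> supsol h q c s t V2 -> V2 t <= V1 t ->
  forall x, s <= x <= t -> V2 x <= V1 x.
Proof.
  intros Hst H1 H2 Hn Hs1 Hs2 Ht x Hx.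
  cut (V2 x - V1 x <= 0); [lra|].
  apply (pos_back s t (fun x => V2 x - V1 x)); auto; [apply cont_on_minus; auto| |lra].
  intros z Hz. destruct (Hs1 z Hz) as [l1 [Hl1 Hl1']]. destruct (Hs2 z Hz) as [l2 [Hl2 Hl2']].
  exists (l2 - l1). split. apply (is_derive_minus V2 V1); auto.
  intros Hp. destruct (Hn z Hz) as [Ha [Hb Hc]].
  pose proof (F_mono h q c z (V1 z) (V2 z) Hc ltac:(lra) Hb). lra.
Qed.

Lemma uniq_back h q c s t V1 V2 : s <= t -> cont_on s t V1 -> cont_on s t V2 ->
  (forall x, s < x < t -> V1 x < 0 /\ V2 x < 0 /\ 0 <= q x) ->
  issol h q c s t V1 -> issol h q c s t V2 -> V1 t = V2 t ->
  forall x, s <= x <= t -> V1 x = V2 x.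
Proof.
  intros Hst H1 H2 Hn Hs1 Hs2 Ht x Hx. apply Rle_antisym.
  - apply (cmp_back h q c s t V2 V1); auto; try lra.
    intros z Hz; destruct (Hn z Hz) as [? [? ?]]; auto.
    apply sol_sub; auto. apply sol_sup; auto.
  - apply (cmp_back h q c s t V1 V2); auto; try lra.
    apply sol_sub; auto. apply sol_sup; auto.
Qed.

Lemma cont_on_point a g : cont_on a a g.
Proof. intros x Hx eps Heps. exists 1. split; [lra|]. intros y Hy _.
  replace y with x by lra. rewrite Rminus_diag, Rabs_R0; lra. Qed.

Lemma back_glue h q c x0 y0 hi :
  0 < x0 <= 1 -> cont_on 0 1 h -> cont_on 0 1 q -> (forall x, 0 <= x <= 1 -> 0 <= q x) ->
  cont_on 0 x0 hi -> (forall x, 0 < x <= x0 -> hi x < 0) -> subsol h q c 0 x0 hi -> y0 <= hi x0 ->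
  exists Y, Y 0 = 0 /\ Y x0 = y0 /\ (forall a, 0 < a <= x0 -> cont_on a x0 Y) /\
    issol h q c 0 x0 Y /\ (forall x, 0 < x <= x0 -> Y x <= hi x).
Proof.
  intros Hx0 Hh Hq Hq0 Hhic Hhin Hhis Hy0.
  destruct (cont_on_bound 0 1 h ltac:(lra) Hh) as [Hm HHm].
  destruct (cont_on_bound 0 1 q ltac:(lra) Hq) as [Qm HQm].
  destruct (cont_on_bound 0 x0 hi ltac:(lra) Hhic) as [Bh HBh].
  set (M2 := Hm + Rabs c + Qm).
  set (A := Bh + Rabs y0 + 1).
  assert (HBh0 : 0 <= Bh) by (specialize (HBh 0 ltac:(lra)); pose proof (Rabs_pos (hi 0)); lra).
  assert (HA : 1 <= A) by (unfold A; pose proof (Rabs_pos y0); lra).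
  assert (HQ0 : 0 <= Qm) by (specialize (HQm 0 ltac:(lra)); pose proof (Rabs_pos (q 0)); lra).
  assert (HM0 : 0 <= Hm) by (specialize (HHm 0 ltac:(lra)); pose proof (Rabs_pos (h 0)); lra).
  set (lo := fun x => - A + M2 * (x - x0)).
  set (P := fun a Y => cont_on a x0 Y /\ Y x0 = y0 /\ (forall x, a <= x <= x0 -> lo x <= Y x <= hi x) /\
                       issol h q c a x0 Y).
  assert (Hex : forall a, exists Y, 0 < a < x0 -> P a Y).
  { intros a. destruct (Rlt_dec 0 a) as [Ha|Ha]; [destruct (Rlt_dec a x0) as [Ha2|Ha2]|];
      [| exists (fun _ => 0); intros; lra| exists (fun _ => 0); intros; lra].
    destruct (cont_on_neg a x0 hi ltac:(lra) (cont_on_sub 0 x0 a x0 hi Hhic ltac:(lra) ltac:(lra)))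
      as [d [Hd Hdn]]. { intros x Hx; apply Hhin; lra. }
    destruct (con_dir true h q c a x0 lo hi y0 d) as [Y [HY1 [HY2 [HY3 HY4]]]]; auto.
    - apply (cont_on_sub 0 1); auto; lra.
    - apply (cont_on_sub 0 1); auto; lra.
    - intros; apply Hq0; lra.
    - unfold lo. apply (cont_on_ext a x0 (fun x => (- A - M2 * x0) + M2 * x)). apply cont_on_lin.
      intros; ring.
    - apply (cont_on_sub 0 x0); auto; lra.
    - intros x Hx. unfold lo. specialize (HBh x ltac:(lra)).
      assert (0 <= M2) by (unfold M2; pose proof (Rabs_pos c); lra).
      assert (M2 * (x - x0) <= 0) by nra.
      unfold Rabs in HBh; destruct Rcase_abs in HBh; unfold A; pose proof (Rabs_pos y0); lra.
    - simpl. intros x Hx. exists M2. split.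
      + unfold lo. auto_derive; auto. ring.
      + unfold Fq, lo. specialize (HHm x ltac:(lra)). specialize (HQm x ltac:(lra)).
        assert (Hlo : - A + M2 * (x - x0) <= - A).
        { assert (0 <= M2) by (unfold M2; pose proof (Rabs_pos c); lra).
          assert (M2 * (x - x0) <= 0) by nra. lra. }
        assert (Hqx : 0 <= q x) by (apply Hq0; lra).
        assert (Hdiv : - (q x / (- A + M2 * (x - x0))) <= Qm).
        { replace (- (q x / (- A + M2 * (x - x0)))) with (q x / (A - M2 * (x - x0))) by (field; lra).
          apply Rle_trans with (q x).
          - unfold Rdiv. rewrite <- (Rmult_1_r (q x)) at 2. apply Rmult_le_compat_l; auto.
            rewrite <- Rinv_1. apply Rinv_le_contravar; lra.
          - unfold Rabs in HQm; destruct Rcase_abs in HQm; lra. }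
        assert (HM2 : M2 = Hm + Rabs c + Qm) by reflexivity. pose proof (Rle_abs (h x)). pose proof (Rle_abs (- c)). rewrite Rabs_Ropp in H0. lra.
    - simpl. intros x Hx. apply Hhis; lra.
    - simpl. split; auto. unfold lo. replace (x0 - x0) with 0 by ring.
      unfold A. pose proof (Rabs_pos y0). pose proof (Rle_abs (- y0)). rewrite Rabs_Ropp in H0. lra.
    - exists Y. intros _. unfold P. split; [|split; [|split]]; auto. }
  set (Yf := fun a => proj1_sig (constructive_indefinite_description _ (Hex a))).
  assert (HYf : forall a, 0 < a < x0 -> P a (Yf a)).
  { intros a Ha. unfold Yf. destruct (constructive_indefinite_description _ (Hex a)) as [Y HY]. simpl. auto. }
  assert (Hcons : forall a a', 0 < a <= a' -> a' < x0 -> forall x, a' <= x <= x0 -> Yf a x = Yf a' x).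
  { intros a a' Ha Ha' x Hx. destruct (HYf a ltac:(lra)) as [H1 [H2 [H3 H4]]].
    destruct (HYf a' ltac:(lra)) as [G1 [G2 [G3 G4]]].
    apply (uniq_back h q c a' x0 (Yf a) (Yf a')); auto; try lra.
    - apply (cont_on_sub a x0); auto; lra.
    - intros z Hz. specialize (H3 z ltac:(lra)). specialize (G3 z ltac:(lra)).
      pose proof (Hhin z ltac:(lra)). repeat split; try lra. apply Hq0; lra.
    - intros z Hz. apply H4; lra. }
  set (Y := fun x => if Rle_dec x 0 then 0 else Yf (Rmin (x / 2) (x0 / 2)) x).
  assert (Hkey : forall x a, 0 < a <= x -> x <= x0 -> a < x0 -> Y x = Yf a x).
  { intros x a Ha Hx Ha0. unfold Y. destruct Rle_dec as [Hn|Hn]; [lra|].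
    set (a1 := Rmin (x / 2) (x0 / 2)).
    assert (Ha1 : 0 < a1 <= x /\ a1 < x0).
    { unfold a1, Rmin. destruct Rle_dec; lra. }
    destruct (Rle_dec a a1).
    - symmetry. apply (Hcons a a1); lra.
    - apply (Hcons a1 a); lra. }
  exists Y. split; [unfold Y; destruct Rle_dec; lra|]. split.
  { rewrite (Hkey x0 (x0 / 2)) by lra. destruct (HYf (x0/2) ltac:(lra)) as [_ [H _]]. auto. }
  split; [|split].
  - intros a Ha. destruct (Req_dec a x0) as [->|Hne]. apply cont_on_point.
    destruct (HYf a ltac:(lra)) as [H1 _].
    apply (cont_on_ext a x0 (Yf a)); auto. intros x Hx. symmetry. apply Hkey; lra.
  - intros x Hx. destruct (HYf (x / 2) ltac:(lra)) as [_ [_ [_ H4]]].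
    rewrite (Hkey x (x / 2)) by lra.
    apply (is_derive_ext_loc (Yf (x / 2))).
    + apply (loc_of_delta x (Rmin (x / 2) (x0 - x))). apply Rmin_pos; lra.
      intros t Ht. assert (Hm1 := Rmin_l (x / 2) (x0 - x)). assert (Hm2 := Rmin_r (x / 2) (x0 - x)).
      symmetry. apply Hkey; unfold Rabs in Ht; destruct Rcase_abs in Ht; lra.
    + apply H4. lra.
  - intros x Hx. destruct (Req_dec x x0) as [->|Hne].
    + rewrite (Hkey x0 (x0 / 2)) by lra. destruct (HYf (x0/2) ltac:(lra)) as [_ [_ [H3 _]]]. apply H3; lra.
    + rewrite (Hkey x (x / 2)) by lra. destruct (HYf (x/2) ltac:(lra)) as [_ [_ [H3 _]]]. apply H3; lra.
Qed.

Lemma diff_back h q c s t V1 V2 k : s <= t -> 0 <= k -> cont_on s t V1 -> cont_on s t V2 ->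
  (forall x, s < x < t -> V1 x < 0 /\ V2 x < 0 /\ 0 <= q x) ->
  issol h q c s t V1 -> issol h q c s t V2 -> V2 t - V1 t <= k ->
  forall x, s <= x <= t -> V2 x - V1 x <= k.
Proof.
  intros Hst Hk H1 H2 Hn Hs1 Hs2 Ht x Hx.
  cut (V2 x - V1 x - k <= 0); [lra|].
  apply (pos_back s t (fun x => V2 x - V1 x - k)); [lra| | | simpl; lra| lra].
  { apply (cont_on_minus s t (fun x => V2 x - V1 x) (fun _ => k)). apply cont_on_minus; auto.
    apply (cont_on_ext s t (fun x => k + 0 * x)). apply cont_on_lin. intros; ring. }
  intros z Hz. exists (Fq h q c z (V2 z) - Fq h q c z (V1 z)). split.
  - apply (is_derive_ext (fun x => V2 x - V1 x + (- k))). 1: (intros; reflexivity).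
    replace (Fq h q c z (V2 z) - Fq h q c z (V1 z)) with (plus (Fq h q c z (V2 z) - Fq h q c z (V1 z)) zero)
      by (unfold plus, zero; simpl; ring).
    apply (is_derive_plus (fun x => V2 x - V1 x) (fun _ => - k)).
    + apply (is_derive_minus V2 V1); auto.
    + exact (is_derive_const (K:=R_AbsRing) (V:=R_NormedModule) (- k) z).
  - intros Hp. destruct (Hn z Hz) as [Ha [Hb Hc]].
    pose proof (F_mono h q c z (V1 z) (V2 z) Hc ltac:(lra) Hb). lra.
Qed.

Lemma cont_on_glue a m0 m1 b Z : a <= m0 -> m0 < m1 -> m1 <= b ->
  cont_on a m1 Z -> cont_on m0 b Z -> cont_on a b Z.
Proof.
  intros H1 H2 H3 HA HB x Hx eps Heps.
  destruct (Rle_dec x ((m0 + m1) / 2)).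
  - destruct (HA x ltac:(lra) eps Heps) as [d [Hd H]].
    exists (Rmin d ((m1 - m0) / 2)). split. apply Rmin_pos; lra.
    intros y Hy Hyx. assert (Hm1 := Rmin_l d ((m1 - m0) / 2)). assert (Hm2 := Rmin_r d ((m1 - m0) / 2)).
    apply H; [|lra]. unfold Rabs in Hyx; destruct Rcase_abs in Hyx; lra.
  - destruct (HB x ltac:(lra) eps Heps) as [d [Hd H]].
    exists (Rmin d ((m1 - m0) / 2)). split. apply Rmin_pos; lra.
    intros y Hy Hyx. assert (Hm1 := Rmin_l d ((m1 - m0) / 2)). assert (Hm2 := Rmin_r d ((m1 - m0) / 2)).
    apply H; [|lra]. unfold Rabs in Hyx; destruct Rcase_abs in Hyx; lra.
Qed.

Lemma mk_solP h q c Z : cont_on 0 1 h -> cont_on 0 1 q -> Z 0 = 0 ->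
  (forall a, 0 < a <= 1 -> cont_on a 1 Z) ->
  (forall eps, 0 < eps -> exists d, 0 < d /\ forall x, 0 < x < d -> Rabs (Z x) < eps) ->
  issol h q c 0 1 Z -> (forall x, 0 < x < 1 -> Z x < 0) -> sol_P h q c Z.
Proof.
  intros Hh Hq HZ0 HZc HZs HZd HZn.
  split; [|split; [|split; [|split; [|split]]]]; auto.
  - intros x Hx eps Heps. destruct (Req_dec x 0) as [->|Hx0].
    + destruct (HZs eps Heps) as [d [Hd H]]. exists d. split; auto.
      intros y Hy Hyx. rewrite HZ0, Rminus_0_r. destruct (Req_dec y 0) as [->|Hy0].
      * rewrite HZ0, Rabs_R0; lra.
      * apply H. rewrite Rminus_0_r in Hyx. unfold Rabs in Hyx; destruct Rcase_abs in Hyx; lra.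
    + destruct (HZc (x / 2) ltac:(lra) x ltac:(lra) eps Heps) as [d [Hd H]].
      exists (Rmin d (x / 2)). split. apply Rmin_pos; lra.
      intros y Hy Hyx. assert (Hm1 := Rmin_l d (x / 2)). assert (Hm2 := Rmin_r d (x / 2)).
      apply H; [|lra]. unfold Rabs in Hyx; destruct Rcase_abs in Hyx; lra.
  - intros x Hx. eexists. apply HZd; auto.
  - intros x Hx.
    apply (continuous_ext_loc _ (fun t => h t - c - q t / Z t)).
    + apply (loc_of_delta x (Rmin x (1 - x))). apply Rmin_pos; lra.
      intros t Ht. assert (Hm1 := Rmin_l x (1 - x)). assert (Hm2 := Rmin_r x (1 - x)).
      symmetry. apply is_derive_unique. apply HZd. unfold Rabs in Ht; destruct Rcase_abs in Ht; lra.
    + apply continuity_pt_filterlim.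
      assert (Hzc : continuity_pt Z x) by (apply derive_cpt with (Fq h q c x (Z x)); apply HZd; auto).
      apply (continuity_pt_minus (fun t => h t - c) (fun t => q t / Z t)).
      * apply (continuity_pt_minus h (fun _ => c)). apply (cont_on_pt 0 1); auto.
        apply continuity_pt_const; intros u v; auto.
      * apply (continuity_pt_div q Z); auto. apply (cont_on_pt 0 1); auto.
        pose proof (HZn x Hx); lra.
Qed.

Lemma lower_f f h q c z : C1_with_deriv f h -> f 0 = 0 -> (forall x, 0 <= x <= 1 -> 0 <= q x) ->
  sol_P h q c z -> forall x, 0 <= x <= 1 -> f x - c * x <= z x.
Proof.
  intros [Hf [Hh Hd]] Hf0 Hq0 [Hzc [_ [_ [Hzd [Hzn Hz0]]]]] x Hx.
  assert (H : z 0 - f 0 + c * 0 <= z x - f x + c * x).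
  { apply (mono_le 0 x (fun t => z t - f t + c * t)); [lra| |].
    - apply (cont_on_sub 0 1); try lra.
      apply (cont_on_plus 0 1 (fun t => z t - f t) (fun t => c * t)). apply cont_on_minus; auto.
      apply (cont_on_ext 0 1 (fun t => 0 + c * t)). apply cont_on_lin. intros; ring.
    - intros t Ht. exists (- (q t / z t)). split.
      + apply (is_derive_ext (fun t => (z t - f t) + c * t)). 1: (intros; reflexivity).
        replace (- (q t / z t)) with (plus (h t - c - q t / z t - h t) c) by (unfold plus; simpl; ring).
        apply (is_derive_plus (fun t => z t - f t) (fun t => c * t)).
        * apply (is_derive_minus z f). apply Hzd; lra. apply Hd; lra.
        * auto_derive; auto. ring.
      + assert (z t < 0) by (apply Hzn; lra). assert (0 <= q t) by (apply Hq0; lra).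
        assert (0 <= q t / - z t) by (apply Rmult_le_pos; auto; left; apply Rinv_0_lt_compat; lra).
        replace (- (q t / z t)) with (q t / - z t) by (field; lra). lra. }
  rewrite Hz0, Hf0 in H. lra.
Qed.

Lemma u_gt_w h q c cs u w : cs < c -> cont_on 0 1 q -> (forall x, 0 <= x <= 1 -> 0 <= q x) ->
  sol_P00 h q c u -> sol_P00 h q cs w -> forall t, 0 < t < 1 -> w t < u t.
Proof.
  intros Hcs Hq Hq0 [[Huc [_ [_ [Hud [Hun Hu0]]]]] Hu1] [[Hwc [_ [_ [Hwd [Hwn Hw0]]]]] Hw1] t Ht.
  destruct (Rlt_le_dec (w t) (u t)) as [|Hle]; auto. exfalso.
  set (ka := c - cs).
  assert (Hka : 0 < ka) by (unfold ka; lra).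
  destruct (cont_on_bound 0 1 q ltac:(lra) Hq) as [Qm HQm].
  assert (Hclaim : forall r, t < r < 1 -> u r - w r <= - ka * (r - t)).
  { intros r Hr.
    destruct (cont_on_neg t r u ltac:(lra) (cont_on_sub 0 1 t r u Huc ltac:(lra) ltac:(lra))) as [du [Hdu Hdun]].
    { intros; apply Hun; lra. }
    destruct (cont_on_neg t r w ltac:(lra) (cont_on_sub 0 1 t r w Hwc ltac:(lra) ltac:(lra))) as [dw [Hdw Hdwn]].
    { intros; apply Hwn; lra. }
    set (Kk := Qm / (du * dw)).
    assert (Hk : forall x, t <= x <= r -> q x / (u x * w x) <= Kk).
    { intros x Hx. specialize (Hdun x Hx). specialize (Hdwn x Hx). specialize (HQm x ltac:(lra)).
      assert (0 <= q x) by (apply Hq0; lra).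
      unfold Kk, Rdiv. apply Rmult_le_compat; auto.
      - left; apply Rinv_0_lt_compat; nra.
      - unfold Rabs in HQm; destruct Rcase_abs in HQm; lra.
      - apply Rinv_le_contravar; nra. }
    assert (Hdn : forall x, t <= x <= r -> u x - w x <= 0).
    { intros x Hx.
      assert (Hg : (u x - w x) * exp (- Kk * x) <= 0).
      { apply (pos_fwd t r (fun x => (u x - w x) * exp (- Kk * x))); [lra| | | | lra].
        - apply (cont_on_ext t r (fun x => exp (- Kk * x) * (u x - w x))); [|intros; ring].
          intros y Hy eps Heps.
          assert (Hc1 : cont_on t r (fun x => u x - w x)).
          { apply cont_on_minus; apply (cont_on_sub 0 1); auto; lra. }
          destruct (cont_on_bound t r (fun x => u x - w x) ltac:(lra) Hc1) as [Bd HBd].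
          assert (HBd0 : 0 <= Bd) by (specialize (HBd t ltac:(lra)); pose proof (Rabs_pos (u t - w t)); lra).
          destruct (cpt_delta (fun x => exp (- Kk * x)) y (eps / (2 * (Bd + 1)))) as [d1 [Hd1 H1]].
          { apply derive_cpt with (- Kk * exp (- Kk * y)). auto_derive; auto. ring. }
          { apply Rdiv_lt_0_compat; lra. }
          destruct (Hc1 y Hy (eps / (2 * (exp (- Kk * y) + 1)))) as [d2 [Hd2 H2]].
          { apply Rdiv_lt_0_compat; [lra|]. pose proof (exp_pos (- Kk * y)); lra. }
          exists (Rmin d1 d2). split; [apply Rmin_pos; auto|]. intros z Hz Hzy.
          assert (Hm1 := Rmin_l d1 d2). assert (Hm2 := Rmin_r d1 d2).
          specialize (H1 z ltac:(lra)). specialize (H2 z Hz ltac:(lra)). specialize (HBd z Hz).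
          replace (exp (- Kk * z) * (u z - w z) - exp (- Kk * y) * (u y - w y))
            with ((exp (- Kk * z) - exp (- Kk * y)) * (u z - w z) + exp (- Kk * y) * ((u z - w z) - (u y - w y))) by ring.
          eapply Rle_lt_trans; [apply Rabs_triang|]. rewrite !Rabs_mult.
          rewrite (Rabs_right (exp (- Kk * y))) by (left; apply exp_pos).
          pose proof (exp_pos (- Kk * y)). pose proof (Rabs_pos (exp (- Kk * z) - exp (- Kk * y))).
          pose proof (Rabs_pos (u z - w z - (u y - w y))).
          assert (A1 : Rabs (exp (- Kk * z) - exp (- Kk * y)) * Rabs (u z - w z) <= eps / (2 * (Bd + 1)) * Bd)
            by (apply Rmult_le_compat; try lra; apply Rabs_pos).
          assert (A2 : exp (- Kk * y) * Rabs (u z - w z - (u y - w y)) <= exp (- Kk * y) * (eps / (2 * (exp (- Kk * y) + 1))))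
            by (apply Rmult_le_compat_l; lra).
          assert (A3 : eps / (2 * (Bd + 1)) * Bd < eps / 2).
          { apply Rmult_lt_reg_r with (2 * (Bd + 1)). lra.
            replace (eps / (2 * (Bd + 1)) * Bd * (2 * (Bd + 1))) with (eps * Bd) by (field; lra). nra. }
          assert (A4 : exp (- Kk * y) * (eps / (2 * (exp (- Kk * y) + 1))) < eps / 2).
          { apply Rmult_lt_reg_r with (2 * (exp (- Kk * y) + 1)). lra.
            replace (exp (- Kk * y) * (eps / (2 * (exp (- Kk * y) + 1))) * (2 * (exp (- Kk * y) + 1)))
              with (eps * exp (- Kk * y)) by (field; lra). nra. }
          lra.
        - intros z Hz.
          set (du' := Fq h q c z (u z) - Fq h q cs z (w z)).
          exists (du' * exp (- Kk * z) + (u z - w z) * (- Kk * exp (- Kk * z))). split.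
          + apply (is_derive_mult (fun x => u x - w x) (fun x => exp (- Kk * x))).
            * apply (is_derive_minus u w). apply Hud; lra. apply Hwd; lra.
            * auto_derive; auto. ring.
            * intros; unfold mult; simpl; ring.
          + intros Hp. assert (Hd : 0 < u z - w z).
            { pose proof (exp_pos (- Kk * z)). destruct (Rle_lt_dec (u z - w z) 0); auto. nra. }
            assert (Hun' : u z < 0) by (apply Hun; lra). assert (Hwn' : w z < 0) by (apply Hwn; lra).
            assert (Heq : du' = - ka + q z / (u z * w z) * (u z - w z)).
            { unfold du', Fq, ka. field. split; lra. }
            specialize (Hk z ltac:(lra)).
            assert (du' - Kk * (u z - w z) <= - ka).
            { rewrite Heq. assert ((q z / (u z * w z) - Kk) * (u z - w z) <= 0) by nra. nra. }
            pose proof (exp_pos (- Kk * z)).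
            assert ((du' - Kk * (u z - w z)) * exp (- Kk * z) <= 0).
            { replace ((du' - Kk * (u z - w z)) * exp (- Kk * z)) with (- ((- (du' - Kk * (u z - w z))) * exp (- Kk * z))) by ring.
              assert (0 <= (- (du' - Kk * (u z - w z))) * exp (- Kk * z)) by (apply Rmult_le_pos; lra). lra. }
            replace (du' * exp (- Kk * z) + (u z - w z) * (- Kk * exp (- Kk * z))) with ((du' - Kk * (u z - w z)) * exp (- Kk * z)) by ring.
            lra.
        - simpl. pose proof (exp_pos (- Kk * t)). nra. }
      pose proof (exp_pos (- Kk * x)). nra. }
    assert (Hm : - (u t - w t) - ka * t <= - (u r - w r) - ka * r).
    { apply (mono_le t r (fun x => - (u x - w x) - ka * x)); [lra| |].
      - apply (cont_on_minus t r (fun x => - (u x - w x)) (fun x => ka * x)).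
        apply cont_on_opp. apply cont_on_minus; apply (cont_on_sub 0 1); auto; lra.
        apply (cont_on_ext t r (fun x => 0 + ka * x)). apply cont_on_lin. intros; ring.
      - intros z Hz. exists (- (Fq h q c z (u z) - Fq h q cs z (w z)) - ka). split.
        + apply (is_derive_minus (fun x => - (u x - w x)) (fun x => ka * x)).
          * apply (is_derive_opp (fun x => u x - w x)). apply (is_derive_minus u w). apply Hud; lra. apply Hwd; lra.
          * auto_derive; auto. ring.
        + assert (Hun' : u z < 0) by (apply Hun; lra). assert (Hwn' : w z < 0) by (apply Hwn; lra).
          assert (Heq : - (Fq h q c z (u z) - Fq h q cs z (w z)) - ka = - (q z / (u z * w z)) * (u z - w z)).
          { unfold Fq, ka. field. split; lra. }
          rewrite Heq. specialize (Hdn z ltac:(lra)). assert (0 <= q z) by (apply Hq0; lra).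
          assert (0 <= q z / (u z * w z)) by (apply Rmult_le_pos; auto; left; apply Rinv_0_lt_compat; nra).
          nra. }
    specialize (Hdn t ltac:(lra)). nra. }
  set (e0 := ka * (1 - t) / 4).
  assert (He0 : 0 < e0) by (unfold e0; apply Rmult_lt_0_compat; [apply Rmult_lt_0_compat|]; lra).
  destruct (Huc 1 ltac:(lra) e0 He0) as [d1 [Hd1 H1]].
  destruct (Hwc 1 ltac:(lra) e0 He0) as [d2 [Hd2 H2]].
  set (r := Rmax ((1 + t) / 2) (1 - Rmin d1 d2 / 2)).
  assert (Hm1 := Rmin_l d1 d2). assert (Hm2 := Rmin_r d1 d2). assert (Hm3 := Rmin_pos _ _ Hd1 Hd2).
  assert (Hr : (1 + t) / 2 <= r /\ 1 - Rmin d1 d2 / 2 <= r /\ r < 1).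
  { unfold r, Rmax. destruct Rle_dec; lra. }
  specialize (Hclaim r ltac:(lra)).
  specialize (H1 r ltac:(lra) ltac:(rewrite Rabs_left by lra; lra)).
  specialize (H2 r ltac:(lra) ltac:(rewrite Rabs_left by lra; lra)).
  rewrite Hu1 in H1. rewrite Hw1 in H2. rewrite Rminus_0_r in H1, H2.
  assert (- ka * (r - t) <= - ka * (1 - t) / 2) by nra.
  unfold e0 in *. unfold Rabs in H1, H2; repeat destruct Rcase_abs; lra.
Qed.

Lemma issol_sub h q c s t s' t' V : issol h q c s t V -> s <= s' -> t' <= t -> issol h q c s' t' V.
Proof. intros H H1 H2 x Hx. apply H; lra. Qed.

Lemma E1 h q c cs u w : cs < c -> cont_on 0 1 h -> cont_on 0 1 q -> (forall x, 0 <= x <= 1 -> 0 <= q x) ->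
  sol_P00 h q c u -> sol_P00 h q cs w ->
  forall eps, 0 < eps -> exists z, sol_P h q c z /\ - eps < z 1 < 0.
Proof.
  intros Hcs Hh Hq Hq0 HU HW eps Heps.
  pose proof (u_gt_w h q c cs u w Hcs Hq Hq0 HU HW) as Hwu.
  destruct HU as [[Huc [_ [_ [Hud [Hun Hu0]]]]] Hu1].
  destruct HW as [[Hwc [_ [_ [Hwd [Hwn Hw0]]]]] Hw1].
  destruct (cont_on_bound 0 1 h ltac:(lra) Hh) as [Hm HHm].
  destruct (cont_on_bound 0 1 u ltac:(lra) Huc) as [Bu HBu].
  assert (HM0 : 0 <= Hm) by (specialize (HHm 0 ltac:(lra)); pose proof (Rabs_pos (h 0)); lra).
  set (M1 := Hm + Rabs c).
  assert (HM1 : 0 <= M1) by (unfold M1; pose proof (Rabs_pos c); lra).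
  assert (HF : forall x z, 0 <= x <= 1 -> z < 0 -> - M1 <= Fq h q c x z).
  { intros x z Hx Hz. unfold Fq, M1. specialize (HHm x Hx). assert (0 <= q x) by auto.
    assert (0 <= q x / - z) by (apply Rmult_le_pos; auto; left; apply Rinv_0_lt_compat; lra).
    replace (h x - c - q x / z) with (h x - c + q x / - z) by (field; lra).
    pose proof (Rle_abs (- h x)). pose proof (Rle_abs c). rewrite Rabs_Ropp in H1. lra. }
  destruct (Huc 1 ltac:(lra) (eps / 3) ltac:(lra)) as [dl [Hdl Hdu]].
  set (m := Rmin (Rmin (dl / 2) (eps / (3 * (M1 + 1)))) (1 / 2)).
  assert (Hmpos : 0 < m).
  { unfold m. apply Rmin_pos; [apply Rmin_pos|]; try lra. apply Rdiv_lt_0_compat; lra. }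
  assert (Hm1 : m <= dl / 2) by (unfold m; eapply Rle_trans; [apply Rmin_l| apply Rmin_l]).
  assert (Hm2 : m <= eps / (3 * (M1 + 1))) by (unfold m; eapply Rle_trans; [apply Rmin_l| apply Rmin_r]).
  assert (Hm3 : m <= 1 / 2) by (unfold m; apply Rmin_r).
  set (x1 := 1 - m).
  assert (Hx1 : 1 / 2 <= x1 < 1) by (unfold x1; lra).
  assert (Hux1 : - (eps / 3) < u x1).
  { specialize (Hdu x1 ltac:(lra) ltac:(unfold x1; rewrite Rabs_left by lra; lra)).
    rewrite Hu1, Rminus_0_r in Hdu. unfold Rabs in Hdu; destruct Rcase_abs in Hdu; lra. }
  assert (HMx : M1 * (1 - x1) < eps / 3).
  { unfold x1. replace (1 - (1 - m)) with m by ring.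
    apply Rle_lt_trans with (M1 * (eps / (3 * (M1 + 1)))). apply Rmult_le_compat_l; lra.
    apply Rmult_lt_reg_r with (3 * (M1 + 1)). lra.
    replace (M1 * (eps / (3 * (M1 + 1))) * (3 * (M1 + 1))) with (M1 * eps) by (field; lra). nra. }
  assert (Hwx1 : w x1 < u x1) by (apply Hwu; lra).
  set (y0 := (Rmax (w x1) (u x1 - eps / 3) + u x1) / 2).
  assert (Hy0 : w x1 < y0 /\ u x1 - eps / 3 < y0 /\ y0 < u x1).
  { unfold y0, Rmax. destruct Rle_dec; lra. }
  set (eta := (u x1 - y0) / 2).
  assert (Heta : 0 < eta) by (unfold eta; lra).
  assert (HBu0 : 0 <= Bu) by (specialize (HBu 0 ltac:(lra)); pose proof (Rabs_pos (u 0)); lra).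
  set (A := Bu + Rabs y0 + eta + 1).
  assert (Hule : forall x, 0 <= x <= 1 -> u x <= 0).
  { intros x Hx. destruct (Req_dec x 1) as [->|]; [lra|]. destruct (Req_dec x 0) as [->|]; [lra|].
    left; apply Hun; lra. }
  destruct (con_dir false h q c x1 1 (fun x => (- A + M1 * x1) + (- M1) * x) (fun x => u x - eta) y0 eta)
    as [Yf [HYc [HY0 [HYb HYd]]]]; simpl.
  - lra.
  - apply (cont_on_sub 0 1); auto; lra.
  - apply (cont_on_sub 0 1); auto; lra.
  - intros; apply Hq0; lra.
  - apply cont_on_lin.
  - apply (cont_on_minus x1 1 u (fun _ => eta)). apply (cont_on_sub 0 1); auto; lra.
    apply (cont_on_ext x1 1 (fun x => eta + 0 * x)). apply cont_on_lin. intros; ring.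
  - intros x Hx. specialize (HBu x ltac:(lra)).
    assert (M1 * (x - x1) >= 0) by (apply Rle_ge, Rmult_le_pos; lra).
    unfold A. pose proof (Rabs_pos y0). unfold Rabs in HBu; destruct Rcase_abs in HBu; nra.
  - exact Heta.
  - intros x Hx. specialize (Hule x ltac:(lra)). lra.
  - intros x Hx. exists (- M1). split. auto_derive; auto. ring.
    apply HF; [lra|]. assert (M1 * (x - x1) >= 0) by (apply Rle_ge, Rmult_le_pos; lra).
    unfold A. pose proof (Rabs_pos y0). nra.
  - intros x Hx. exists (Fq h q c x (u x)). split.
    + apply (is_derive_ext (fun x => u x + (- eta))). 1: (intros; reflexivity).
      replace (Fq h q c x (u x)) with (plus (Fq h q c x (u x)) zero) by (unfold plus, zero; simpl; ring).
      apply (is_derive_plus u (fun _ => - eta)). apply Hud; lra.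
      exact (is_derive_const (K:=R_AbsRing) (V:=R_NormedModule) (- eta) x).
    + apply F_mono. apply Hq0; lra. lra. apply Hun; lra.
  - split. unfold A. replace (- A + M1 * x1 + - M1 * x1) with (- A) by ring.
    unfold A. pose proof (Rle_abs (- y0)). rewrite Rabs_Ropp in H. lra.
    unfold eta. lra.
  -
    assert (HYn : forall x, x1 <= x <= 1 -> Yf x < 0).
    { intros x Hx. destruct (HYb x Hx). specialize (Hule x ltac:(lra)). lra. }
    assert (HY1 : y0 - M1 * (1 - x1) <= Yf 1).
    { assert (H : Yf x1 + M1 * x1 <= Yf 1 + M1 * 1).
      { apply (mono_le x1 1 (fun x => Yf x + M1 * x)); [lra| |].
        - apply (cont_on_plus x1 1 Yf (fun x => M1 * x)); auto.
          apply (cont_on_ext x1 1 (fun x => 0 + M1 * x)). apply cont_on_lin. intros; ring.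
        - intros x Hx. exists (Fq h q c x (Yf x) + M1). split.
          + apply (is_derive_plus Yf (fun x => M1 * x)). apply HYd; auto. auto_derive; auto. ring.
          + pose proof (HF x (Yf x) ltac:(lra) (HYn x ltac:(lra))). lra. }
      rewrite HY0 in H. lra. }
    assert (HY1' : Yf 1 <= - eta) by (destruct (HYb 1 ltac:(lra)); rewrite Hu1 in *; lra).
    set (x0' := (x1 + 1) / 2).
    destruct (back_glue h q c x0' (Yf x0') u) as [Yb [HYb0 [HYbx [HYbc [HYbd HYbu]]]]]; auto.
    { unfold x0'; lra. }
    { apply (cont_on_sub 0 1); auto; unfold x0'; lra. }
    { intros x Hx. apply Hun. unfold x0' in Hx; lra. }
    { apply sol_sub. intros x Hx. apply Hud. unfold x0' in Hx; lra. }
    { destruct (HYb x0' ltac:(unfold x0'; lra)). lra. }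
    assert (Hagree : forall x, x1 <= x <= x0' -> Yb x = Yf x).
    { intros x Hx. apply (uniq_back h q c x1 x0' Yb Yf); auto; try (unfold x0'; lra).
      - apply HYbc; unfold x0'; lra.
      - apply (cont_on_sub x1 1); auto; unfold x0'; lra.
      - intros z Hz. split; [|split].
        + pose proof (HYbu z ltac:(unfold x0' in *; lra)). pose proof (Hun z ltac:(unfold x0' in *; lra)). lra.
        + apply HYn; unfold x0' in *; lra.
        + apply Hq0; unfold x0' in *; lra.
      - apply (issol_sub h q c 0 x0'); auto; lra.
      - apply (issol_sub h q c x1 1); auto; unfold x0'; lra. }
    assert (HYbx1 : Yb x1 = y0) by (rewrite Hagree; auto; unfold x0'; lra).
    assert (Hwb : forall x, 0 < x <= x1 -> w x <= Yb x).
    { intros x Hx. apply (cmp_back h q c x x1 Yb w); auto; try lra.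
      - apply (cont_on_sub x x0'); [apply HYbc|..]; unfold x0'; lra.
      - apply (cont_on_sub 0 1); auto; lra.
      - intros z Hz. split; [|split].
        + pose proof (HYbu z ltac:(unfold x0' in *; lra)). pose proof (Hun z ltac:(lra)). lra.
        + apply Hwn; lra.
        + apply Hq0; lra.
      - apply sol_sub. apply (issol_sub h q c 0 x0'); auto; unfold x0'; lra.
      - intros z Hz. exists (Fq h q cs z (w z)). split. apply Hwd; lra. unfold Fq. lra. }
    set (Z := fun x => if Rle_dec x x1 then Yb x else Yf x).
    assert (HZa : forall x, 0 <= x <= x0' -> Z x = Yb x).
    { intros x Hx. unfold Z. destruct Rle_dec; auto. symmetry; apply Hagree; lra. }
    assert (HZb : forall x, x1 <= x -> Z x = Yf x).
    { intros x Hx. unfold Z. destruct Rle_dec; auto. replace x with x1 by lra. rewrite HYbx1, HY0; auto. }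
    exists Z. split.
    + apply mk_solP; auto.
      * rewrite HZa; auto. unfold x0'; lra.
      * assert (Hc2 : cont_on x1 1 Z) by (apply (cont_on_ext x1 1 Yf); auto; intros; symmetry; apply HZb; lra).
        intros a Ha. destruct (Rle_dec a x1).
        -- apply (cont_on_glue a x1 x0' 1); auto; try (unfold x0'; lra).
           apply (cont_on_ext a x0' Yb). apply HYbc; unfold x0'; lra.
           intros; symmetry; apply HZa; lra.
        -- apply (cont_on_sub x1 1); auto; lra.
      * intros e He. destruct (Huc 0 ltac:(lra) e He) as [d1 [Hd1 H1]].
        destruct (Hwc 0 ltac:(lra) e He) as [d2 [Hd2 H2]].
        exists (Rmin (Rmin d1 d2) x1). split. apply Rmin_pos; [apply Rmin_pos|]; lra.
        intros x Hx. pose proof (Rmin_l (Rmin d1 d2) x1). pose proof (Rmin_r (Rmin d1 d2) x1).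
        pose proof (Rmin_l d1 d2). pose proof (Rmin_r d1 d2).
        specialize (H1 x ltac:(lra) ltac:(rewrite Rminus_0_r, Rabs_right; lra)).
        specialize (H2 x ltac:(lra) ltac:(rewrite Rminus_0_r, Rabs_right; lra)).
        rewrite Hu0, Rminus_0_r in H1. rewrite Hw0, Rminus_0_r in H2.
        rewrite HZa by (unfold x0'; lra). pose proof (Hwb x ltac:(lra)). pose proof (HYbu x ltac:(unfold x0'; lra)).
        revert H1 H2. unfold Rabs; repeat destruct Rcase_abs; lra.
      * intros x Hx. destruct (Rlt_dec x x0').
        -- rewrite (HZa x) by lra.
           apply (is_derive_ext_loc Yb).
           ++ apply (loc_of_delta x (Rmin x (x0' - x))). apply Rmin_pos; lra.
              intros t Ht. pose proof (Rmin_l x (x0' - x)). pose proof (Rmin_r x (x0' - x)).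
              symmetry. apply HZa. unfold Rabs in Ht; destruct Rcase_abs in Ht; lra.
           ++ apply HYbd; lra.
        -- rewrite (HZb x) by (unfold x0' in *; lra).
           apply (is_derive_ext_loc Yf).
           ++ apply (loc_of_delta x (Rmin (x - x1) (1 - x))). apply Rmin_pos; unfold x0' in *; lra.
              intros t Ht. pose proof (Rmin_l (x - x1) (1 - x)). pose proof (Rmin_r (x - x1) (1 - x)).
              symmetry. apply HZb. unfold Rabs in Ht; destruct Rcase_abs in Ht; lra.
           ++ apply HYd; unfold x0' in *; lra.
      * intros x Hx. unfold Z. destruct Rle_dec.
        -- pose proof (HYbu x ltac:(unfold x0'; lra)). pose proof (Hun x Hx). lra.
        -- apply HYn; lra.
    + rewrite HZb by lra. lra.
Qed.

Theorem proposition5p1 (f h q : R -> R) (cstar : R) :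
  C1_with_deriv f h ->
  f 0 = 0 ->
  cond_q q ->
  (forall c, (exists z, sol_P00 h q c z) <-> cstar <= c) ->
  forall c, cstar < c ->
  exists beta, beta < 0 /\ f 1 - c <= beta /\
    (forall b, b < 0 ->
       ((exists z, sol_P h q c z /\ z 1 = b) <-> beta <= b)) /\
    (forall b, b < 0 -> forall z1 z2,
       sol_P h q c z1 -> z1 1 = b ->
       sol_P h q c z2 -> z2 1 = b ->
       forall x, 0 <= x <= 1 -> z1 x = z2 x).
Proof.
  intros HC1 Hf0 Hcq Hcs c Hc.
  pose proof HC1 as [Hfc [Hhc Hfd]].
  destruct Hcq as [Hqc [Hqpos [Hq00 [Hq01 _]]]].
  assert (Hq0 : forall x, 0 <= x <= 1 -> 0 <= q x).
  { intros x Hx. destruct (Req_dec x 0) as [->|]; [lra|]. destruct (Req_dec x 1) as [->|]; [lra|].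
    left; apply Hqpos; lra. }
  destruct (proj2 (Hcs c) ltac:(lra)) as [u Hu].
  destruct (proj2 (Hcs cstar) ltac:(lra)) as [w Hw].
  pose proof (E1 h q c cstar u w Hc Hhc Hqc Hq0 Hu Hw) as HE1.
  set (S := fun b => b < 0 /\ exists z, sol_P h q c z /\ z 1 = b).
  assert (HSlb : forall b, S b -> f 1 - c <= b).
  { intros b [_ [z [Hz Hz1]]]. pose proof (lower_f f h q c z HC1 Hf0 Hq0 Hz 1 ltac:(lra)). lra. }
  assert (HSe : forall e, 0 < e -> exists b, S b /\ - e < b).
  { intros e He. destruct (HE1 e He) as [z [Hz Hz1]]. exists (z 1). split; [split; [lra| exists z; auto]| lra]. }
  set (E := fun v => S (- v)).
  destruct (completeness E) as [m [Hub Hlub]].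
  { exists (c - f 1). intros v Hv. specialize (HSlb _ Hv). lra. }
  { destruct (HSe 1 ltac:(lra)) as [b [Hb _]]. exists (- b). unfold E. rewrite Ropp_involutive. auto. }
  set (beta := - m).
  assert (Hble : forall b, S b -> beta <= b).
  { intros b Hb. assert (E (- b)) by (unfold E; rewrite Ropp_involutive; auto). specialize (Hub _ H). unfold beta; lra. }
  assert (Hbinf : forall e, 0 < e -> exists b, S b /\ b < beta + e).
  { intros e He. apply Classical_Prop.NNPP. intros Hn.
    assert (Hb : is_upper_bound E (m - e)).
    { intros v Hv. destruct (Rle_dec v (m - e)); auto. exfalso. apply Hn. exists (- v). split; auto.
      unfold beta; lra. }
    specialize (Hlub _ Hb). lra. }
  assert (Hbge : f 1 - c <= beta).
  { assert (Hb : is_upper_bound E (c - f 1)) by (intros v Hv; specialize (HSlb _ Hv); lra).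
    specialize (Hlub _ Hb). unfold beta; lra. }
  assert (Hblt : beta < 0).
  { destruct (HSe 1 ltac:(lra)) as [b [Hb _]]. specialize (Hble b Hb). destruct Hb. lra. }
  exists beta. split; auto. split; auto. split.
  - intros b Hb. split.
    + intros [z [Hz Hz1]]. apply Hble. split; auto. exists z; auto.
    + intros Hbb.
      destruct (HE1 (- b) ltac:(lra)) as [z0 [Hz0 Hz01]].
      pose proof Hz0 as [Hz0c [_ [_ [Hz0d [Hz0n Hz00]]]]].
      destruct (back_glue h q c 1 b z0) as [Y [HY0 [HY1 [HYc [HYd HYu]]]]]; auto; try lra.
      { intros x Hx. destruct (Req_dec x 1) as [->|]; [lra|]. apply Hz0n; lra. }
      { apply sol_sub. intros x Hx. apply Hz0d; auto. }
      assert (HYn : forall x, 0 < x < 1 -> Y x < 0).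
      { intros x Hx. pose proof (HYu x ltac:(lra)). pose proof (Hz0n x Hx). lra. }
      assert (Hlow : forall x, 0 < x <= 1 -> f x - c * x <= Y x).
      { intros x Hx. apply (small_le _ _ 1); [lra|]. intros n.
        assert (Hp : 0 < (/2)^n) by (apply pow_lt; lra).
        destruct (Hbinf _ Hp) as [b' [Hb' Hb'2]].
        pose proof Hb' as [Hb'n [z' [Hz' Hz'1]]].
        pose proof Hz' as [Hz'c [_ [_ [Hz'd [Hz'n Hz'0]]]]].
        pose proof (lower_f f h q c z' HC1 Hf0 Hq0 Hz' x ltac:(lra)) as Hlz.
        assert (Hneg : forall z, x < z < 1 -> Y z < 0 /\ z' z < 0 /\ 0 <= q z).
        { intros z Hz. split; [apply HYn; lra| split; [apply Hz'n; lra| apply Hq0; lra]]. }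
        destruct (Rle_dec b' b).
        - assert (z' x <= Y x).
          { apply (cmp_back h q c x 1 Y z'); auto; try lra.
            - apply (cont_on_sub 0 1); auto; lra.
            - apply sol_sub. apply (issol_sub h q c 0 1); auto; lra.
            - apply sol_sup. intros z Hz. apply Hz'd; lra. }
          lra.
        - assert (z' x - Y x <= b' - b).
          { apply (diff_back h q c x 1 Y z' (b' - b)); auto; try lra.
            - apply (cont_on_sub 0 1); auto; lra.
            - apply (issol_sub h q c 0 1); auto; lra.
            - intros z Hz. apply Hz'd; lra. }
          lra. }
      exists Y. split; auto.
      apply mk_solP; auto.
      * intros e He.
        destruct (Hfc 0 ltac:(lra) (e / 2) ltac:(lra)) as [d1 [Hd1 H1]].
        destruct (Hz0c 0 ltac:(lra) e He) as [d2 [Hd2 H2]].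
        set (d3 := e / (2 * (Rabs c + 1))).
        assert (Hd3 : 0 < d3) by (unfold d3; apply Rdiv_lt_0_compat; [lra| pose proof (Rabs_pos c); lra]).
        exists (Rmin (Rmin d1 d2) (Rmin d3 1)). split. apply Rmin_pos; apply Rmin_pos; lra.
        intros x Hx. pose proof (Rmin_l (Rmin d1 d2) (Rmin d3 1)). pose proof (Rmin_r (Rmin d1 d2) (Rmin d3 1)).
        pose proof (Rmin_l d1 d2). pose proof (Rmin_r d1 d2). pose proof (Rmin_l d3 1). pose proof (Rmin_r d3 1).
        specialize (H1 x ltac:(lra) ltac:(rewrite Rminus_0_r, Rabs_right; lra)).
        rewrite Hf0, Rminus_0_r in H1.
        assert (Hcx : Rabs (c * x) < e / 2).
        { rewrite Rabs_mult, (Rabs_right x) by lra. pose proof (Rabs_pos c).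
          apply Rle_lt_trans with (Rabs c * d3). apply Rmult_le_compat_l; lra.
          unfold d3. apply Rmult_lt_reg_r with (2 * (Rabs c + 1)). lra.
          replace (Rabs c * (e / (2 * (Rabs c + 1))) * (2 * (Rabs c + 1))) with (Rabs c * e) by (field; lra).
          nra. }
        pose proof (Hlow x ltac:(lra)). pose proof (HYn x ltac:(lra)).
        rewrite Rabs_left by lra.
        revert H1 Hcx. unfold Rabs; repeat destruct Rcase_abs; lra.
  - intros b Hb z1 z2 Hz1 Hz1b Hz2 Hz2b x Hx.
    destruct (Req_dec x 0) as [->|Hx0].
    { destruct Hz1 as [_ [_ [_ [_ [_ H1]]]]]. destruct Hz2 as [_ [_ [_ [_ [_ H2]]]]]. lra. }
    pose proof Hz1 as [H1c [_ [_ [H1d [H1n _]]]]].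
    pose proof Hz2 as [H2c [_ [_ [H2d [H2n _]]]]].
    apply (uniq_back h q c x 1 z1 z2); auto; try lra.
    + apply (cont_on_sub 0 1); auto; lra.
    + apply (cont_on_sub 0 1); auto; lra.
    + intros z Hz. split; [apply H1n; lra| split; [apply H2n; lra| apply Hq0; lra]].
    + intros z Hz. apply H1d; lra.
    + intros z Hz. apply H2d; lra.
Qed.
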